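(* Let $G:\mathbb{R}\to\mathbb{R}$ satisfy: $G\ge 0$ and $\mathrm{supp}(G)=\mathbb{R}$; $G\in W^{1,1}(\mathbb{R})\cap L^\infty(\mathbb{R})\cap C^2(\mathbb{R})$; $G(x)=g(|x|)$ with $g'(r)<0$ for all $r>0$, $g''(0)<0$, $\lim_{r\to+\infty}g(r)=0$; and $\int G=1$. For $L>0$ let $X_L=\{f\in C^1([0,L]):f(0)=0\}$ with norm $\|f\|_{L^\infty}+\|f'\|_{L^\infty}$ and let $\mathcal{H}_L:X_L\to X_L$ be $$\mathcal{H}_L[u](x)=\int_0^L\big(G(x-y)-G(x+y)\big)u(y)\,dy.$$ Let $\varepsilon(L)$ be the simple eigenvalue of $\mathcal{H}_L$ equal to its spectral radius, which has an eigenfunction $u\ge0$ (equivalently, the number $\varepsilon(L)>0$ for which there is a symmetric $\rho\in C^2([-L,L])$ of unit mass with $\rho'\le0$ on $[0,L]$ solving $\varepsilon(L)\rho(x)=\int_{-L}^LG(x-y)\rho(y)\,dy+C$ on $[-L,L]$, with $u=-\rho'$). Then $\varepsilon(L)$ is uniquely determined as a function of $L$, and: (i) $\varepsilon(L)$ is strictly increasing in $L$; (ii) $\lim_{L\to+\infty}\varepsilon(L)=1$; (iii) $\varepsilon(0)=0$, where for $L=0$ the operator $\mathcal{H}_0$ is the zero operator.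
   Context: Eigenvalue equation: $\varepsilon u=\mathcal{H}_L[u]$. *)

(* Defs.v *)
From Stdlib Require Import Reals.
From Coquelicot Require Import Coquelicot.
Open Scope R_scope.

Definition cont_on (a b : R) (f : R -> R) : Prop :=
  forall x, a <= x <= b -> forall eps, 0 < eps -> exists delta, 0 < delta /\
    forall y, a <= y <= b -> Rabs (y - x) < delta -> Rabs (f y - f x) < eps.

Definition C1_on (a b : R) (f : R -> R) : Prop :=
  exists df : R -> R, cont_on a b df /\
    forall x, a <= x <= b -> f x = f a + RInt df a x.

Definition X_L (L : R) (f : R -> R) : Prop := C1_on 0 L f /\ f 0 = 0.

(* supp(G) = R : the closure of {G <> 0} is all of R. *)
Definition full_support (G : R -> R) : Prop :=
  forall x eps, 0 < eps -> exists y, Rabs (y - x) < eps /\ G y <> 0.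

Definition C2 (G : R -> R) : Prop :=
  forall x, ex_derive G x /\ ex_derive (Derive G) x /\
            continuous (Derive (Derive G)) x.

Definition integrable_R (f : R -> R) : Prop :=
  ex_RInt_gen (fun x => Rabs (f x)) (Rbar_locally m_infty) (Rbar_locally p_infty).

Definition kernel_hyp (G : R -> R) : Prop :=
  (forall x, 0 <= G x) /\
  full_support G /\
  (* G in W^{1,1}(R) (G is C^2, so its weak derivative is Derive G) *)
  integrable_R G /\ integrable_R (Derive G) /\
  (exists M, forall x, Rabs (G x) <= M) /\
  C2 G /\
  (exists g : R -> R, (forall x, G x = g (Rabs x)) /\
     (forall r, 0 < r -> ex_derive g r /\ Derive g r < 0) /\
     (* g''(0) < 0 : second (one-sided) derivative of g at 0, which equals G''(0) *)
     Derive (Derive G) 0 < 0 /\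
     is_lim g p_infty 0) /\
  is_RInt_gen G (Rbar_locally m_infty) (Rbar_locally p_infty) 1.

Definition H_op (G : R -> R) (L : R) (u : R -> R) (x : R) : R :=
  RInt (fun y => (G (x - y) - G (x + y)) * u y) 0 L.

Definition pos_eigenvalue (G : R -> R) (L e : R) : Prop :=
  exists u : R -> R, X_L L u /\
    (forall x, 0 <= x <= L -> 0 <= u x) /\
    (exists x, 0 <= x <= L /\ u x <> 0) /\
    (forall x, 0 <= x <= L -> e * u x = H_op G L u x).

(* Main.v *)
Require Import Defs.
From Stdlib Require Import Reals Lra Lia IndefiniteDescription.
From Coquelicot Require Import Coquelicot.
Open Scope R_scope.

Lemma cont_iff (f : R -> R) x : continuous f x <-> continuity_pt f x.
Proof. rewrite continuity_pt_filterlim. tauto. Qed.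

Lemma exd_cont (f : R -> R) x : ex_derive f x -> continuous f x.
Proof. intros H. exact (@ex_derive_continuous R_AbsRing R_NormedModule f x H). Qed.

Lemma cR_opp (f : R -> R) x : continuous f x -> continuous (fun t => - f t) x.
Proof. rewrite !cont_iff. apply continuity_pt_opp. Qed.
Lemma cR_plus (f g : R -> R) x : continuous f x -> continuous g x -> continuous (fun t => f t + g t) x.
Proof. rewrite !cont_iff. apply continuity_pt_plus. Qed.
Lemma cR_minus (f g : R -> R) x : continuous f x -> continuous g x -> continuous (fun t => f t - g t) x.
Proof. rewrite !cont_iff. apply continuity_pt_minus. Qed.
Lemma cR_mult (f g : R -> R) x : continuous f x -> continuous g x -> continuous (fun t => f t * g t) x.
Proof. rewrite !cont_iff. apply continuity_pt_mult. Qed.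
Lemma cR_const (c x : R) : continuous (fun _ => c) x.
Proof. rewrite cont_iff. apply continuity_pt_const. intros a b; reflexivity. Qed.
Lemma cR_id (x : R) : continuous (fun t => t) x.
Proof. rewrite cont_iff. apply continuity_pt_id. Qed.
Lemma cR_comp (f g : R -> R) x : continuous f x -> continuous g (f x) -> continuous (fun t => g (f t)) x.
Proof. rewrite !cont_iff. intros; apply (continuity_pt_comp f g); auto. Qed.
Lemma cR_abs x : continuous Rabs x.
Proof. rewrite cont_iff. apply Rcontinuity_abs. Qed.

Lemma hG_nonneg G : kernel_hyp G -> forall x, 0 <= G x.
Proof. intros H; apply H. Qed.

Lemma hG_C2 G : kernel_hyp G -> C2 G.
Proof. intros (_&_&_&_&_&H&_); exact H. Qed.

Lemma hG_even G : kernel_hyp G -> forall x, G (- x) = G x.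
Proof.
  intros (_&_&_&_&_&_&(g&Hg&_)&_) x. rewrite !Hg, Rabs_Ropp. reflexivity.
Qed.

Lemma hG_ex G : kernel_hyp G -> forall x, ex_derive G x.
Proof. intros H x; apply (hG_C2 G H x). Qed.

Lemma hG_ex2 G : kernel_hyp G -> forall x, ex_derive (Derive G) x.
Proof. intros H x; apply (hG_C2 G H x). Qed.

Lemma hG_cont G : kernel_hyp G -> forall x, continuous G x.
Proof. intros H x; apply exd_cont, hG_ex, H. Qed.

Lemma hG_dcont G : kernel_hyp G -> forall x, continuous (Derive G) x.
Proof. intros H x; apply exd_cont, hG_ex2, H. Qed.

Lemma hG_d2cont G : kernel_hyp G -> forall x, continuous (Derive (Derive G)) x.
Proof. intros H x; apply (hG_C2 G H x). Qed.

Lemma hG_d2neg G : kernel_hyp G -> Derive (Derive G) 0 < 0.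
Proof. intros (_&_&_&_&_&_&(g&_&_&H&_)&_); exact H. Qed.

Lemma hG_dodd G : kernel_hyp G -> forall x, Derive G (- x) = - Derive G x.
Proof.
  intros H x.
  assert (E : Derive G x = Derive (fun t => G (- t)) x).
  { apply Derive_ext. intros t. now rewrite hG_even. }
  assert (E2 : Derive (fun t => G (- t)) x = - Derive G (- x)).
  { apply is_derive_unique.
    replace (- Derive G (- x)) with (scal (-1) (Derive G (- x))).
    2:{ unfold scal; simpl; unfold mult; simpl. ring. }
    apply (is_derive_comp G (fun t => - t)).
    - apply Derive_correct, hG_ex, H.
    - auto_derive; auto. }
  rewrite E, E2. ring.
Qed.

Lemma hG_d0 G : kernel_hyp G -> Derive G 0 = 0.
Proof.
  intros H. pose proof (hG_dodd G H 0). rewrite Ropp_0 in H0. lra.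
Qed.

Lemma hG_dneg G : kernel_hyp G -> forall t, 0 < t -> Derive G t < 0.
Proof.
  intros H t Ht. destruct H as (_&_&_&_&_&_&(g&Hg&Hd&_)&_).
  rewrite (Derive_ext_loc G g).
  - apply Hd, Ht.
  - assert (Hp : 0 < t / 2) by lra.
    exists (mkposreal _ Hp). intros s Hs. simpl in Hs.
    unfold ball in Hs; simpl in Hs; unfold AbsRing_ball, abs, minus, plus, opp in Hs; simpl in Hs.
    rewrite Hg. f_equal. apply Rabs_right.
    apply Rabs_def2 in Hs. lra.
Qed.

Lemma ball_R (x e y : R) : ball x e y <-> Rabs (y - x) < e.
Proof. unfold ball; simpl; unfold AbsRing_ball, abs, minus, plus, opp; simpl. tauto. Qed.

Lemma cont_eps (f : R -> R) x : continuous f x ->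
  forall eps, 0 < eps -> exists d, 0 < d /\ forall y, Rabs (y - x) < d -> Rabs (f y - f x) < eps.
Proof.
  intros Hc eps He.
  destruct ((proj1 (filterlim_locally f (f x))) Hc (mkposreal _ He)) as [d Hd].
  exists d. split; [apply cond_pos|]. intros y Hy.
  apply ball_R. apply Hd. apply ball_R. exact Hy.
Qed.

Lemma MVT_R (f df : R -> R) a b : a <= b ->
  (forall x, a <= x <= b -> is_derive f x (df x)) ->
  exists c, a <= c <= b /\ f b - f a = df c * (b - a).
Proof.
  intros Hab Hd.
  destruct (MVT_gen f a b df) as (c & Hc & E).
  - intros x Hx. rewrite Rmin_left, Rmax_right in Hx by lra. apply Hd; lra.
  - intros x Hx. rewrite Rmin_left, Rmax_right in Hx by lra.
    apply cont_iff. apply exd_cont. eexists. apply Hd. lra.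
  - rewrite Rmin_left, Rmax_right in Hc by lra. exists c. split; auto.
Qed.

Lemma dG_correct G : kernel_hyp G -> forall x, is_derive G x (Derive G x).
Proof. intros H x. apply Derive_correct, hG_ex, H. Qed.

Lemma d2G_correct G : kernel_hyp G -> forall x, is_derive (Derive G) x (Derive (Derive G) x).
Proof. intros H x. apply Derive_correct, hG_ex2, H. Qed.

Lemma G_decr G : kernel_hyp G -> forall a b, 0 <= a -> a <= b -> G b <= G a.
Proof.
  intros H a b Ha Hab.
  destruct (MVT_R G (Derive G) a b Hab (fun x _ => dG_correct G H x)) as (c & Hc & E).
  destruct (Req_dec c 0) as [->|Hc0].
  - rewrite hG_d0 in E by exact H. lra.
  - pose proof (hG_dneg G H c ltac:(lra)). nra.
Qed.

Lemma G_le0 G : kernel_hyp G -> forall x, G x <= G 0.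
Proof.
  intros H x. destruct (Rle_dec 0 x).
  - apply G_decr; auto; lra.
  - rewrite <- (hG_even G H x). apply G_decr; auto; lra.
Qed.

Lemma G_abs G : kernel_hyp G -> forall x, G x = G (Rabs x).
Proof.
  intros H x. destruct (Rle_dec 0 x).
  - rewrite Rabs_right; auto; lra.
  - rewrite Rabs_left by lra. rewrite hG_even; auto.
Qed.

Lemma h_bounds G : kernel_hyp G -> forall L, 0 < L ->
  exists c0 C0, 0 < c0 /\ 0 < C0 /\
    forall t, 0 <= t <= 2 * L -> c0 * t <= - Derive G t <= C0 * t.
Proof.
  intros H L HL.
  set (d2 := Derive (Derive G)).
  pose proof (hG_d2neg G H) as Hn. fold d2 in Hn.
  destruct (cont_eps d2 0 (hG_d2cont G H 0) (- d2 0 / 2) ltac:(lra)) as (al & Hal & Hc).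
  assert (Hnear : forall t, 0 <= t < al -> (- d2 0 / 2) * t <= - Derive G t).
  { intros t Ht. destruct (MVT_R (Derive G) d2 0 t ltac:(lra) (fun x _ => d2G_correct G H x)) as (c & Hc' & E).
    rewrite hG_d0 in E by exact H.
    assert (Hd : Rabs (d2 c - d2 0) < - d2 0 / 2) by (apply Hc; rewrite Rminus_0_r, Rabs_right; lra).
    apply Rabs_def2 in Hd. nra. }
  set (be := Rmin (al / 2) L).
  assert (Hbe : 0 < be) by (unfold be; apply Rmin_glb_lt; lra).
  assert (Hbe2 : be <= L) by apply Rmin_r.
  assert (Hbe3 : be < al) by (unfold be; pose proof (Rmin_l (al/2) L); lra).
  destruct (continuity_ab_min (fun t => - Derive G t) be (2 * L) ltac:(lra)) as (mx & Hmx & Hmxb).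
  { intros c _. apply cont_iff. apply cR_opp. apply hG_dcont, H. }
  set (m := - Derive G mx).
  assert (Hm : 0 < m) by (unfold m; pose proof (hG_dneg G H mx ltac:(lra)); lra).
  destruct (continuity_ab_maj (fun t => Rabs (d2 t)) 0 (2 * L) ltac:(lra)) as (Mx & HMx & HMxb).
  { intros c _. apply cont_iff. apply (cR_comp d2 Rabs).
    - apply hG_d2cont, H.
    - apply cR_abs. }
  exists (Rmin (- d2 0 / 2) (m / (2 * L))), (Rabs (d2 Mx) + 1).
  split; [apply Rmin_glb_lt; [lra| apply Rdiv_lt_0_compat; lra]|].
  split; [pose proof (Rabs_pos (d2 Mx)); lra|].
  intros t Ht. split.
  - destruct (Rle_dec t be).
    + pose proof (Hnear t ltac:(lra)). pose proof (Rmin_l (- d2 0 / 2) (m / (2 * L))). nra.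
    + pose proof (Hmx t ltac:(lra)). fold m in H0.
      pose proof (Rmin_r (- d2 0 / 2) (m / (2 * L))).
      assert (m / (2 * L) * t <= m).
      { apply Rle_trans with (m / (2 * L) * (2 * L)). apply Rmult_le_compat_l.
        apply Rlt_le, Rdiv_lt_0_compat; lra. lra. right; field; lra. }
      nra.
  - destruct (MVT_R (Derive G) d2 0 t ltac:(lra) (fun x _ => d2G_correct G H x)) as (c & Hc' & E).
    rewrite hG_d0 in E by exact H.
    pose proof (HMx c ltac:(lra)). simpl in H0.
    pose proof (Rle_abs (- d2 c)). rewrite Rabs_Ropp in H1. nra.
Qed.

Lemma kernel_bounds G : kernel_hyp G -> forall L, 0 < L ->
  exists c C, 0 < c /\ 0 < C /\
    forall x y, 0 <= x <= L -> 0 <= y <= L ->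
      c * x * y <= G (x - y) - G (x + y) <= C * x * y.
Proof.
  intros H L HL.
  destruct (h_bounds G H L HL) as (c0 & C0 & Hc0 & HC0 & Hb).
  exists (2 * c0), (2 * C0). split; [lra|]. split; [lra|].
  intros x y Hx Hy.
  set (a := Rabs (x - y)). set (b := x + y).
  assert (Ha : 0 <= a) by apply Rabs_pos.
  assert (Hab : a <= b) by (unfold a, b; apply Rabs_le; lra).
  assert (Hb2 : b <= 2 * L) by (unfold b; lra).
  assert (E : a * a = (x - y) * (x - y)).
  { unfold a. rewrite <- Rabs_mult. apply Rabs_right. apply Rle_ge, Rle_0_sqr. }
  assert (Hk : G (x - y) = G a) by (unfold a; apply G_abs, H).
  rewrite Hk.
  destruct (MVT_R (fun s => G s + c0 / 2 * (s * s)) (fun s => Derive G s + c0 * s) a b Hab) as (c & Hc & E1).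
  { intros s _. apply (is_derive_plus G). apply dG_correct, H.
    auto_derive; [auto| field]. }
  destruct (MVT_R (fun s => G s + C0 / 2 * (s * s)) (fun s => Derive G s + C0 * s) a b Hab) as (c' & Hc' & E2).
  { intros s _. apply (is_derive_plus G). apply dG_correct, H.
    auto_derive; [auto| field]. }
  pose proof (Hb c ltac:(lra)). pose proof (Hb c' ltac:(lra)).
  assert (S1 : (Derive G c + c0 * c) * (b - a) <= 0).
  { apply Rmult_le_0_r; lra. }
  assert (S2 : 0 <= (Derive G c' + C0 * c') * (b - a)).
  { apply Rmult_le_pos; lra. }
  assert (Eb : b * b = (x + y) * (x + y)) by reflexivity.
  fold b. split; nra.
Qed.

Lemma exr_cont (f : R -> R) a b : a <= b -> (forall z, a <= z <= b -> continuous f z) -> ex_RInt f a b.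
Proof.
  intros Hab H. apply (@ex_RInt_continuous R_CompleteNormedModule).
  intros z Hz. rewrite Rmin_left, Rmax_right in Hz by lra. apply H; lra.
Qed.

Lemma exr_minus (f g : R -> R) a b : ex_RInt f a b -> ex_RInt g a b -> ex_RInt (fun x => f x - g x) a b.
Proof. intros H1 H2. exact (@ex_RInt_minus R_NormedModule f g a b H1 H2). Qed.
Lemma exr_plus (f g : R -> R) a b : ex_RInt f a b -> ex_RInt g a b -> ex_RInt (fun x => f x + g x) a b.
Proof. intros H1 H2. exact (@ex_RInt_plus R_NormedModule f g a b H1 H2). Qed.
Lemma exr_scal (f : R -> R) a b l : ex_RInt f a b -> ex_RInt (fun x => l * f x) a b.
Proof. intros H. exact (@ex_RInt_scal R_NormedModule f a b l H). Qed.

Lemma rint_scal (f : R -> R) a b l : ex_RInt f a b -> RInt (fun x => l * f x) a b = l * RInt f a b.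
Proof. intros H. exact (@RInt_scal R_CompleteNormedModule f a b l H). Qed.

Lemma rint_minus (f g : R -> R) a b : ex_RInt f a b -> ex_RInt g a b ->
  RInt (fun x => f x - g x) a b = RInt f a b - RInt g a b.
Proof. intros H1 H2. exact (@RInt_minus R_CompleteNormedModule f g a b H1 H2). Qed.

Lemma rint_plus (f g : R -> R) a b : ex_RInt f a b -> ex_RInt g a b ->
  RInt (fun x => f x + g x) a b = RInt f a b + RInt g a b.
Proof. intros H1 H2. exact (@RInt_plus R_CompleteNormedModule f g a b H1 H2). Qed.

Lemma rint_const (c a b : R) : RInt (fun _ => c) a b = (b - a) * c.
Proof. exact (@RInt_const R_CompleteNormedModule a b c). Qed.

Lemma rint_chasles (f : R -> R) a b c : ex_RInt f a b -> ex_RInt f b c ->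
  RInt f a b + RInt f b c = RInt f a c.
Proof. intros H1 H2. exact (@RInt_Chasles R_CompleteNormedModule f a b c H1 H2). Qed.

Lemma rint_ext (f g : R -> R) a b : a <= b -> (forall x, a <= x <= b -> f x = g x) -> RInt f a b = RInt g a b.
Proof.
  intros Hab H. apply RInt_ext. intros x Hx. rewrite Rmin_left, Rmax_right in Hx by lra. apply H; lra.
Qed.

Lemma rint_ext_all (f g : R -> R) a b : (forall x, f x = g x) -> RInt f a b = RInt g a b.
Proof. intros H. apply RInt_ext. intros; apply H. Qed.

Lemma rint_le (f g : R -> R) a b : a <= b -> ex_RInt f a b -> ex_RInt g a b ->
  (forall x, a <= x <= b -> f x <= g x) -> RInt f a b <= RInt g a b.
Proof. intros Hab H1 H2 H. apply RInt_le; auto. intros; apply H; lra. Qed.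

Lemma rint_nonneg (f : R -> R) a b : a <= b -> ex_RInt f a b ->
  (forall x, a <= x <= b -> 0 <= f x) -> 0 <= RInt f a b.
Proof.
  intros Hab H1 H.
  assert (E : RInt (fun _ => 0) a b = 0) by (rewrite rint_const; apply Rmult_0_r).
  rewrite <- E. apply rint_le; auto. apply ex_RInt_const.
Qed.

Lemma rint_abs_le (f : R -> R) a b M : a <= b -> ex_RInt f a b ->
  (forall t, a <= t <= b -> Rabs (f t) <= M) -> Rabs (RInt f a b) <= (b - a) * M.
Proof. intros; apply abs_RInt_le_const; auto. Qed.

Lemma cont_of_eps (f : R -> R) x :
  (forall eps, 0 < eps -> exists d, 0 < d /\ forall y, Rabs (y - x) < d -> Rabs (f y - f x) < eps) ->
  continuous f x.
Proof.
  intros H. apply (proj2 (filterlim_locally f (f x))). intros eps.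
  destruct (H eps (cond_pos eps)) as (d & Hd & Hd').
  exists (mkposreal d Hd). intros y Hy. apply ball_R. apply Hd'. apply ball_R in Hy. exact Hy.
Qed.

Definition contR (f : R -> R) := forall x, continuous f x.

Lemma cont_bound (f : R -> R) a b : a <= b -> (forall x, a <= x <= b -> continuous f x) ->
  exists M, 0 <= M /\ forall x, a <= x <= b -> Rabs (f x) <= M.
Proof.
  intros Hab Hc.
  destruct (continuity_ab_maj (fun t => Rabs (f t)) a b Hab) as (Mx & HM & _).
  { intros c Hc'. apply cont_iff. apply (cR_comp f Rabs). apply Hc; auto. apply cR_abs. }
  exists (Rabs (f Mx)). split; [apply Rabs_pos|]. intros; apply HM; auto.
Qed.

Lemma abs_bet u r : Rabs u <= r -> - r <= u <= r.
Proof. intros H. pose proof (Rle_abs u). pose proof (Rle_abs (- u)). rewrite Rabs_Ropp in H1. lra. Qed.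

Lemma abs_sub_le u v : Rabs (u - v) <= Rabs u + Rabs v.
Proof. unfold Rminus. eapply Rle_trans; [apply Rabs_triang|]. rewrite Rabs_Ropp. lra. Qed.

Lemma lip_loc (F : R -> R) : (forall x, ex_derive F x) -> (forall x, continuous (Derive F) x) ->
  forall R0, exists B, 0 <= B /\ forall u v, Rabs u <= R0 -> Rabs v <= R0 -> Rabs (F u - F v) <= B * Rabs (u - v).
Proof.
  intros Hd Hc R0.
  destruct (Rle_dec 0 R0) as [HR|HR].
  2:{ exists 0. split; [lra|]. intros u v Hu. pose proof (Rabs_pos u). lra. }
  destruct (cont_bound (Derive F) (- R0) R0 ltac:(lra)) as (B & HB & HB').
  { intros; apply Hc. }
  exists B. split; auto. intros u v Hu Hv.
  apply abs_bet in Hu. apply abs_bet in Hv.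
  destruct (Rle_dec u v).
  - destruct (MVT_R F (Derive F) u v r) as (c & Hc' & E).
    { intros; apply Derive_correct, Hd. }
    rewrite <- Rabs_Ropp, Ropp_minus_distr, E, Rabs_mult.
    rewrite <- (Rabs_Ropp (u - v)), Ropp_minus_distr.
    apply Rmult_le_compat_r; [apply Rabs_pos|]. apply HB'; lra.
  - destruct (MVT_R F (Derive F) v u ltac:(lra)) as (c & Hc' & E).
    { intros; apply Derive_correct, Hd. }
    rewrite E, Rabs_mult.
    apply Rmult_le_compat_r; [apply Rabs_pos|]. apply HB'; lra.
Qed.

Definition Kop (k : R -> R -> R) (a b : R) (f : R -> R) (x : R) : R :=
  RInt (fun y => k x y * f y) a b.

Definition locLip (k : R -> R -> R) (a b : R) :=
  forall x0, exists B d, 0 <= B /\ 0 < d /\ forall x y, Rabs (x - x0) < d -> a <= y <= b ->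
    Rabs (k x y - k x0 y) <= B * Rabs (x - x0).

Lemma Kop_ex (k : R -> R -> R) a b (f : R -> R) x : a <= b -> (forall y, continuous (k x) y) -> contR f ->
  ex_RInt (fun y => k x y * f y) a b.
Proof. intros Hab Hk Hf. apply exr_cont; auto. intros z _. apply cR_mult; auto. Qed.

Lemma Kop_cont (k : R -> R -> R) a b (f : R -> R) : a <= b -> (forall x y, continuous (k x) y) -> locLip k a b -> contR f ->
  contR (Kop k a b f).
Proof.
  intros Hab Hk HL Hf x0.
  destruct (cont_bound f a b Hab) as (Mf & HMf & HMf'). { intros; apply Hf. }
  destruct (HL x0) as (B & d & HB & Hd & HBd).
  apply cont_of_eps. intros eps He.
  set (D := (b - a) * B * Mf + 1).
  assert (HD : 0 < D) by (unfold D; pose proof (Rmult_le_pos _ _ (Rmult_le_pos _ _ (Rle_trans _ _ _ (Rle_refl 0) (Rge_le _ _ (Rge_minus _ _ (Rle_ge _ _ Hab)))) HB) HMf); lra).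
  exists (Rmin d (eps / D)). split.
  { apply Rmin_glb_lt; auto. apply Rdiv_lt_0_compat; auto. }
  intros y Hy.
  pose proof (Rmin_l d (eps / D)). pose proof (Rmin_r d (eps / D)).
  unfold Kop. rewrite <- rint_minus by (apply Kop_ex; auto).
  eapply Rle_lt_trans.
  - apply (rint_abs_le _ a b (B * Rabs (y - x0) * Mf)); auto.
    + apply exr_minus; apply Kop_ex; auto.
    + intros t Ht. rewrite <- Rmult_minus_distr_r, Rabs_mult.
      apply Rmult_le_compat; try apply Rabs_pos. apply HBd; auto; lra. apply HMf'; auto.
  - assert (Hy' : Rabs (y - x0) < eps / D) by lra.
    assert ((b - a) * (B * Rabs (y - x0) * Mf) <= ((b - a) * B * Mf) * Rabs (y - x0)) by (right; ring).
    assert ((b - a) * B * Mf * Rabs (y - x0) <= (D - 1) * Rabs (y - x0)) by (unfold D; right; ring).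
    assert ((D - 1) * Rabs (y - x0) < D * (eps / D)).
    { pose proof (Rabs_pos (y - x0)). apply Rle_lt_trans with (D * Rabs (y - x0)). nra.
      apply Rmult_lt_compat_l; auto. }
    replace (D * (eps / D)) with eps in H3 by (field; lra). lra.
Qed.

Definition kern (F : R -> R) (x y : R) := F (x - y) - F (x + y).

Lemma kern_locLip (F : R -> R) a b : (forall x, ex_derive F x) -> (forall x, continuous (Derive F) x) -> locLip (kern F) a b.
Proof.
  intros Hd Hc x0.
  destruct (lip_loc F Hd Hc (Rabs x0 + 1 + Rabs a + Rabs b)) as (B & HB & HB').
  exists (2 * B), 1. split; [lra|]. split; [lra|].
  intros x y Hx Hy. unfold kern.
  assert (Hy' : Rabs y <= Rabs a + Rabs b).
  { apply Rabs_le. pose proof (Rabs_pos a); pose proof (Rabs_pos b).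
    pose proof (Rle_abs a); pose proof (Rle_abs b); pose proof (Rle_abs (-a)); pose proof (Rle_abs (-b)).
    rewrite Rabs_Ropp in *. lra. }
  assert (Hx' : Rabs x <= Rabs x0 + 1).
  { pose proof (Rabs_triang (x - x0) x0). replace (x - x0 + x0) with x in H by ring. lra. }
  replace (F (x - y) - F (x + y) - (F (x0 - y) - F (x0 + y))) with
    ((F (x - y) - F (x0 - y)) - (F (x + y) - F (x0 + y))) by ring.
  eapply Rle_trans; [apply abs_sub_le|].
  assert (E1 : Rabs (F (x - y) - F (x0 - y)) <= B * Rabs (x - x0)).
  { replace (x - x0) with ((x - y) - (x0 - y)) by ring. apply HB';
    (eapply Rle_trans; [apply abs_sub_le|]); pose proof (Rabs_pos x0); pose proof (Rabs_pos a);
    pose proof (Rabs_pos b); pose proof (abs_sub_le x0 y); lra. }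
  assert (E2 : Rabs (F (x + y) - F (x0 + y)) <= B * Rabs (x - x0)).
  { replace (x - x0) with ((x + y) - (x0 + y)) by ring. apply HB';
    (eapply Rle_trans; [apply Rabs_triang|]); pose proof (Rabs_pos x0); pose proof (Rabs_pos a);
    pose proof (Rabs_pos b); pose proof (Rabs_triang x0 y); lra. }
  lra.
Qed.

Lemma kern_cont (F : R -> R) : (forall x, continuous F x) -> forall x y, continuous (kern F x) y.
Proof.
  intros Hc x y. unfold kern. apply cR_minus.
  - apply (cR_comp (fun t => x - t) F); [apply cR_minus; [apply cR_const|apply cR_id]|apply Hc].
  - apply (cR_comp (fun t => x + t) F); [apply cR_plus; [apply cR_const|apply cR_id]|apply Hc].
Qed.

Definition Hk (G : R -> R) (L : R) (f : R -> R) := Kop (kern G) 0 L f.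

Lemma Hk_H_op G L f x : H_op G L f x = Hk G L f x.
Proof. reflexivity. Qed.

Lemma G_locLip G a b : kernel_hyp G -> locLip (kern G) a b.
Proof. intros H. apply kern_locLip. apply hG_ex, H. apply hG_dcont, H. Qed.

Lemma dG_locLip G a b : kernel_hyp G -> locLip (kern (Derive G)) a b.
Proof. intros H. apply kern_locLip. apply hG_ex2, H. apply hG_d2cont, H. Qed.

Lemma Kop_G_cont G a b f : kernel_hyp G -> a <= b -> contR f -> contR (Kop (kern G) a b f).
Proof.
  intros H Hab Hf. apply Kop_cont; auto. apply kern_cont, hG_cont, H. apply G_locLip, H.
Qed.

Lemma Hk_cont G L f : kernel_hyp G -> 0 <= L -> contR f -> contR (Hk G L f).
Proof. intros; apply Kop_G_cont; auto. Qed.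

Lemma Hk_ex G L f x : kernel_hyp G -> 0 <= L -> contR f -> ex_RInt (fun y => kern G x y * f y) 0 L.
Proof. intros H HL Hf. apply Kop_ex; auto. apply kern_cont, hG_cont, H. Qed.

Lemma kern_nonneg G L : kernel_hyp G -> 0 < L -> forall x y, 0 <= x <= L -> 0 <= y <= L -> 0 <= kern G x y.
Proof.
  intros H HL x y Hx Hy. destruct (kernel_bounds G H L HL) as (c & C & Hc & HC & Hb).
  destruct (Hb x y Hx Hy). unfold kern. pose proof (Rmult_le_pos _ _ (Rmult_le_pos _ _ (Rlt_le _ _ Hc) (proj1 Hx)) (proj1 Hy)). lra.
Qed.

Lemma Hk_mono G L f g x : kernel_hyp G -> 0 < L -> contR f -> contR g ->
  (forall y, 0 <= y <= L -> f y <= g y) -> 0 <= x <= L -> Hk G L f x <= Hk G L g x.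
Proof.
  intros H HL Hf Hg Hfg Hx. unfold Hk, Kop. apply rint_le; try lra; try (apply Hk_ex; auto; lra).
  intros y Hy. apply Rmult_le_compat_l. apply (kern_nonneg G L); auto. apply Hfg; auto.
Qed.

Lemma Hk_nonneg G L f x : kernel_hyp G -> 0 < L -> contR f ->
  (forall y, 0 <= y <= L -> 0 <= f y) -> 0 <= x <= L -> 0 <= Hk G L f x.
Proof.
  intros H HL Hf Hpos Hx. unfold Hk, Kop. apply rint_nonneg; try lra. apply Hk_ex; auto; lra.
  intros y Hy. apply Rmult_le_pos. apply (kern_nonneg G L); auto. apply Hpos; auto.
Qed.

Lemma Hk_scal G L f c x : kernel_hyp G -> 0 <= L -> contR f ->
  Hk G L (fun y => c * f y) x = c * Hk G L f x.
Proof.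
  intros H HL Hf. unfold Hk, Kop. rewrite <- rint_scal by (apply Hk_ex; auto).
  apply rint_ext_all. intros; ring.
Qed.

Lemma Hk_minus G L f g x : kernel_hyp G -> 0 <= L -> contR f -> contR g ->
  Hk G L (fun y => f y - g y) x = Hk G L f x - Hk G L g x.
Proof.
  intros H HL Hf Hg. unfold Hk, Kop. rewrite <- rint_minus by (apply Hk_ex; auto).
  apply rint_ext_all. intros; ring.
Qed.

Lemma Hk_ext G L f g x : 0 <= L -> (forall y, 0 <= y <= L -> f y = g y) -> Hk G L f x = Hk G L g x.
Proof.
  intros HL E. unfold Hk, Kop. apply rint_ext; auto. intros y Hy. rewrite E; auto.
Qed.

Definition Pw (L : R) (f : R -> R) : R := RInt (fun y => y * f y) 0 L.

Lemma Pw_ex L f : 0 <= L -> contR f -> ex_RInt (fun y => y * f y) 0 L.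
Proof. intros HL Hf. apply exr_cont; auto. intros; apply cR_mult; auto. apply cR_id. Qed.

Lemma Pw_mono L f g : 0 <= L -> contR f -> contR g -> (forall y, 0 <= y <= L -> f y <= g y) -> Pw L f <= Pw L g.
Proof.
  intros HL Hf Hg Hfg. unfold Pw. apply rint_le; auto; try (apply Pw_ex; auto).
  intros y Hy. apply Rmult_le_compat_l; try lra. apply Hfg; auto.
Qed.

Lemma Pw_nonneg L f : 0 <= L -> contR f -> (forall y, 0 <= y <= L -> 0 <= f y) -> 0 <= Pw L f.
Proof.
  intros HL Hf Hp. unfold Pw. apply rint_nonneg; auto. apply Pw_ex; auto.
  intros y Hy. apply Rmult_le_pos; try lra. apply Hp; auto.
Qed.

Lemma Pw_scal L f c : 0 <= L -> contR f -> Pw L (fun y => c * f y) = c * Pw L f.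
Proof.
  intros HL Hf. unfold Pw. rewrite <- rint_scal by (apply Pw_ex; auto). apply rint_ext_all; intros; ring.
Qed.

Lemma Pw_minus L f g : 0 <= L -> contR f -> contR g -> Pw L (fun y => f y - g y) = Pw L f - Pw L g.
Proof.
  intros HL Hf Hg. unfold Pw. rewrite <- rint_minus by (apply Pw_ex; auto). apply rint_ext_all; intros; ring.
Qed.

Lemma Hk_compar G L c C : kernel_hyp G -> 0 < L ->
  (forall x y, 0 <= x <= L -> 0 <= y <= L -> c * x * y <= G (x - y) - G (x + y) <= C * x * y) ->
  forall f x, contR f -> (forall y, 0 <= y <= L -> 0 <= f y) -> 0 <= x <= L ->
  c * x * Pw L f <= Hk G L f x <= C * x * Pw L f.
Proof.
  intros H HL Hb f x Hf Hp Hx. unfold Pw, Hk, Kop.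
  rewrite <- (rint_scal (fun y => y * f y) 0 L (c * x)) by (apply Pw_ex; auto; lra).
  rewrite <- (rint_scal (fun y => y * f y) 0 L (C * x)) by (apply Pw_ex; auto; lra).
  assert (E1 := Pw_ex L f ltac:(lra) Hf). assert (E2 := Hk_ex G L f x H ltac:(lra) Hf).
  assert (Hl : 0 <= L) by lra.
  split.
  - apply (rint_le _ _ 0 L Hl (exr_scal _ _ _ _ E1) E2).
    intros y Hy; destruct (Hb x y Hx Hy) as [B1 B2]; pose proof (Hp y Hy). unfold kern.
    replace (c * x * (y * f y)) with ((c * x * y) * f y) by ring. apply Rmult_le_compat_r; auto.
  - apply (rint_le _ _ 0 L Hl E2 (exr_scal _ _ _ _ E1)).
    intros y Hy; destruct (Hb x y Hx Hy) as [B1 B2]; pose proof (Hp y Hy). unfold kern.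
    replace (C * x * (y * f y)) with ((C * x * y) * f y) by ring. apply Rmult_le_compat_r; auto.
Qed.

Lemma kern_deriv G v u t : kernel_hyp G ->
  Derive (fun z => kern G z t * v t) u = kern (Derive G) u t * v t.
Proof.
  intros H. apply is_derive_unique. unfold kern.
  auto_derive.
  - split; [apply hG_ex, H|]. split; [apply hG_ex, H|]. exact I.
  - change (fun x => G x) with G. replace (u + - t) with (u - t) by ring. ring.
Qed.

Lemma cont2_comp1 (F : R -> R) (s : R) x t : (forall z, continuous F z) ->
  continuity_2d_pt (fun u w => F (u + s * w)) x t.
Proof.
  intros Hc. apply (continuity_1d_2d_pt_comp F (fun u w => u + s * w)).
  - apply cont_iff, Hc.
  - apply continuity_2d_pt_plus. apply continuity_2d_pt_id1.
    apply continuity_2d_pt_mult. apply continuity_2d_pt_const. apply continuity_2d_pt_id2.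
Qed.

Lemma cont2_2 (F : R -> R) x t : (forall z, continuous F z) ->
  continuity_2d_pt (fun u w => F w) x t.
Proof.
  intros Hc. apply (continuity_1d_2d_pt_comp F (fun u w => w)).
  - apply cont_iff, Hc.
  - apply continuity_2d_pt_id2.
Qed.

Lemma Hk_derive G L v : kernel_hyp G -> 0 <= L -> contR v ->
  forall x, is_derive (Hk G L v) x (Kop (kern (Derive G)) 0 L v x).
Proof.
  intros H HL Hv x.
  unfold Hk, Kop.
  assert (E : RInt (fun y => kern (Derive G) x y * v y) 0 L =
              RInt (fun t => Derive (fun u => kern G u t * v t) x) 0 L).
  { apply rint_ext_all. intros t. rewrite kern_deriv; auto. }
  rewrite E.
  apply (is_derive_RInt_param (fun u t => kern G u t * v t) 0 L x).
  - exists (mkposreal 1 Rlt_0_1). intros y _ t _. unfold kern.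
    auto_derive. split; [apply hG_ex, H|]. split; [apply hG_ex, H|]. exact I.
  - intros t _. simpl.
    apply (continuity_2d_pt_ext (fun u w => (Derive G (u + (-1) * w) - Derive G (u + 1 * w)) * v w)).
    { intros u w. rewrite kern_deriv by exact H. unfold kern. f_equal. f_equal; f_equal; ring. }
    apply continuity_2d_pt_mult; [apply continuity_2d_pt_minus|].
    + apply cont2_comp1, hG_dcont, H.
    + apply cont2_comp1, hG_dcont, H.
    + apply cont2_2, Hv.
  - exists (mkposreal 1 Rlt_0_1). intros y _. apply Hk_ex; auto.
Qed.

Lemma Hk_at0 G L v : kernel_hyp G -> Hk G L v 0 = 0.
Proof.
  intros H. unfold Hk, Kop. rewrite (rint_ext_all _ (fun _ => 0)).
  - rewrite rint_const; ring.
  - intros y. unfold kern. rewrite Rminus_0_l, Rplus_0_l, hG_even by exact H. ring.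
Qed.

Lemma contR_cont_on f a b : contR f -> cont_on a b f.
Proof.
  intros Hf x _ eps He. destruct (cont_eps f x (Hf x) eps He) as (d & Hd & Hd').
  exists d. split; auto.
Qed.

Lemma Hk_C1 G L v : kernel_hyp G -> 0 <= L -> contR v -> C1_on 0 L (Hk G L v).
Proof.
  intros H HL Hv. exists (Kop (kern (Derive G)) 0 L v). split.
  - apply contR_cont_on. apply Kop_cont; auto. apply kern_cont, hG_dcont, H. apply dG_locLip, H.
  - intros x Hx.
    assert (Hi : is_RInt (Kop (kern (Derive G)) 0 L v) 0 x (minus (Hk G L v x) (Hk G L v 0))).
    { apply (@is_RInt_derive R_CompleteNormedModule). intros; apply Hk_derive; auto.
      intros; apply Kop_cont; auto. apply kern_cont, hG_dcont, H. apply dG_locLip, H. }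
    apply (@is_RInt_unique R_CompleteNormedModule) in Hi. rewrite Hi. unfold minus, plus, opp; simpl. ring.
Qed.

Definition KB (G : R -> R) (L c C : R) :=
  0 < c /\ 0 < C /\ forall x y, 0 <= x <= L -> 0 <= y <= L -> c * x * y <= G (x - y) - G (x + y) <= C * x * y.

Fixpoint itf (G : R -> R) (L : R) (n : nat) : R -> R :=
  match n with 0 => fun x => x | S n => Hk G L (itf G L n) end.

Lemma itf_cont G L n : kernel_hyp G -> 0 < L -> contR (itf G L n).
Proof.
  intros H HL. induction n; simpl. intros x; apply cR_id. apply Hk_cont; auto; lra.
Qed.

Lemma itf_pos G L n : kernel_hyp G -> 0 < L -> forall y, 0 <= y <= L -> 0 <= itf G L n y.
Proof.
  intros H HL. induction n; simpl; intros y Hy. lra.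
  apply Hk_nonneg; auto. apply itf_cont; auto.
Qed.

Definition Qc (L : R) := Pw L (fun y => y).

Lemma Qc_pos L : 0 < L -> 0 < Qc L.
Proof.
  intros HL. unfold Qc, Pw. apply RInt_gt_0; auto.
  intros x Hx. apply Rmult_lt_0_compat; lra.
  intros x _. apply cR_mult; apply cR_id.
Qed.

Lemma Hk_lowup G L c C f x : kernel_hyp G -> 0 < L -> KB G L c C -> contR f ->
  (forall y, 0 <= y <= L -> 0 <= f y) -> 0 <= x <= L ->
  c * x * Pw L f <= Hk G L f x <= C * x * Pw L f.
Proof. intros H HL (Hc & HC & Hb) Hf Hp Hx. apply Hk_compar; auto. Qed.

Definition Pn G L n := Pw L (itf G L n).

Lemma Pn_bounds G L c C n : kernel_hyp G -> 0 < L -> KB G L c C ->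
  c * Qc L * Pn G L n <= Pn G L (S n) <= C * Qc L * Pn G L n.
Proof.
  intros H HL HK. unfold Pn, Qc. simpl.
  assert (Hl : 0 <= L) by lra.
  assert (Hcid : contR (fun y => y)) by (intros x; apply cR_id).
  split.
  - replace (c * Pw L (fun y => y) * Pw L (itf G L n)) with (Pw L (fun y => (c * Pw L (itf G L n)) * y)).
    2:{ rewrite Pw_scal; [ring|lra|exact Hcid]. }
    apply Pw_mono; auto. intros x; apply cR_mult; [apply cR_const|apply cR_id].
    apply Hk_cont; auto. apply itf_cont; auto.
    intros y Hy. destruct (Hk_lowup G L c C (itf G L n) y H HL HK (itf_cont G L n H HL) (itf_pos G L n H HL) Hy).
    lra.
  - replace (C * Pw L (fun y => y) * Pw L (itf G L n)) with (Pw L (fun y => (C * Pw L (itf G L n)) * y)).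
    2:{ rewrite Pw_scal; [ring|lra|exact Hcid]. }
    apply Pw_mono; auto. apply Hk_cont; auto. apply itf_cont; auto.
    intros x; apply cR_mult; [apply cR_const|apply cR_id].
    intros y Hy. destruct (Hk_lowup G L c C (itf G L n) y H HL HK (itf_cont G L n H HL) (itf_pos G L n H HL) Hy).
    lra.
Qed.

Lemma Pn_pos G L c C n : kernel_hyp G -> 0 < L -> KB G L c C -> 0 < Pn G L n.
Proof.
  intros H HL HK. induction n.
  - apply Qc_pos; auto.
  - destruct (Pn_bounds G L c C n H HL HK). destruct HK as (Hc & _).
    pose proof (Qc_pos L HL).
    assert (0 < c * Qc L * Pn G L n) by (apply Rmult_lt_0_compat; auto; apply Rmult_lt_0_compat; auto).
    lra.
Qed.

Definition brk G L n m M := forall x, 0 <= x <= L -> m * itf G L n x <= itf G L (S n) x <= M * itf G L n x.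

Lemma brk0 G L c C : kernel_hyp G -> 0 < L -> KB G L c C -> brk G L 0 (c * Qc L) (C * Qc L).
Proof.
  intros H HL HK x Hx. simpl.
  destruct (Hk_lowup G L c C (fun y => y) x H HL HK (fun z => cR_id z)) as [A B]; auto.
  intros; lra. unfold Qc. split; lra.
Qed.

Lemma brk_prop G L n m M : kernel_hyp G -> 0 < L -> brk G L n m M -> brk G L (S n) m M.
Proof.
  intros H HL Hb x Hx.
  assert (Hl : 0 <= L) by lra.
  pose proof (itf_cont G L n H HL) as C0. pose proof (itf_cont G L (S n) H HL) as C1.
  change (itf G L (S (S n)) x) with (Hk G L (itf G L (S n)) x).
  change (itf G L (S n) x) with (Hk G L (itf G L n) x).
  split.
  - rewrite <- Hk_scal by auto.
    apply Hk_mono; auto. intros z; apply cR_mult; [apply cR_const|apply C0].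
    intros y Hy. apply Hb; auto.
  - rewrite <- Hk_scal by auto.
    apply Hk_mono; auto. intros z; apply cR_mult; [apply cR_const|apply C0].
    intros y Hy. apply Hb; auto.
Qed.

Lemma brk_later G L n m M : kernel_hyp G -> 0 < L -> brk G L n m M -> forall k, (n <= k)%nat -> brk G L k m M.
Proof.
  intros H HL Hb k Hk. induction Hk; auto. apply brk_prop; auto.
Qed.

Lemma brk_step G L c C n m M : kernel_hyp G -> 0 < L -> KB G L c C -> brk G L n m M -> m <= M ->
  let A := Pw L (fun y => itf G L (S n) y - m * itf G L n y) in
  let B := Pw L (fun y => M * itf G L n y - itf G L (S n) y) in
  0 <= A /\ 0 <= B /\ A + B = (M - m) * Pn G L n /\
  brk G L (S n) (m + (c / C) * A / Pn G L n) (M - (c / C) * B / Pn G L n).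
Proof.
  intros H HL HK Hb HmM A B.
  assert (Hl : 0 <= L) by lra.
  pose proof (itf_cont G L n H HL) as C0. pose proof (itf_cont G L (S n) H HL) as C1.
  pose proof (Pn_pos G L c C n H HL HK) as HP.
  assert (HK' := HK). destruct HK' as (Hc & HC & _).
  assert (CA : contR (fun y => itf G L (S n) y - m * itf G L n y)).
  { intros z; apply cR_minus; [apply C1|apply cR_mult; [apply cR_const|apply C0]]. }
  assert (CB : contR (fun y => M * itf G L n y - itf G L (S n) y)).
  { intros z; apply cR_minus; [apply cR_mult; [apply cR_const|apply C0]|apply C1]. }
  assert (PA : forall y, 0 <= y <= L -> 0 <= itf G L (S n) y - m * itf G L n y).
  { intros y Hy. destruct (Hb y Hy). lra. }
  assert (PB : forall y, 0 <= y <= L -> 0 <= M * itf G L n y - itf G L (S n) y).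
  { intros y Hy. destruct (Hb y Hy). lra. }
  assert (HA : 0 <= A) by (apply Pw_nonneg; auto).
  assert (HB : 0 <= B) by (apply Pw_nonneg; auto).
  split; auto. split; auto. split.
  { unfold A, B. rewrite !Pw_minus, !Pw_scal; auto.
    - unfold Pn. ring.
    - intros z; apply cR_mult; [apply cR_const|apply C0].
    - intros z; apply cR_mult; [apply cR_const|apply C0]. }
  intros x Hx.
  destruct (Hk_lowup G L c C (itf G L n) x H HL HK C0 (itf_pos G L n H HL) Hx) as [_ Up].
  change (Hk G L (itf G L n) x) with (itf G L (S n) x) in Up. fold (Pn G L n) in Up.
  destruct (Hk_lowup G L c C _ x H HL HK CA PA Hx) as [LA _]. fold A in LA.
  destruct (Hk_lowup G L c C _ x H HL HK CB PB Hx) as [LB _]. fold B in LB.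
  rewrite Hk_minus, Hk_scal in LA; auto.
  2:{ intros z; apply cR_mult; [apply cR_const|apply C0]. }
  rewrite Hk_minus, Hk_scal in LB; auto.
  2:{ intros z; apply cR_mult; [apply cR_const|apply C0]. }
  change (Hk G L (itf G L (S n)) x) with (itf G L (S (S n)) x) in LA, LB.
  change (Hk G L (itf G L n) x) with (itf G L (S n) x) in LA, LB.
  set (Fn := itf G L (S n) x) in *. set (Fs := itf G L (S (S n)) x) in *.
  set (P := Pn G L n) in *.
  assert (Hpos : 0 <= Fn) by (apply (itf_pos G L (S n)); auto).
  assert (K1 : c / C * A / P * Fn <= c * x * A).
  { apply Rle_trans with (c / C * A / P * (C * x * P)).
    - apply Rmult_le_compat_l; auto. unfold Rdiv. repeat apply Rmult_le_pos; try lra.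
      apply Rlt_le, Rinv_0_lt_compat; lra. apply Rlt_le, Rinv_0_lt_compat; lra.
    - right. field. lra. }
  assert (K2 : c / C * B / P * Fn <= c * x * B).
  { apply Rle_trans with (c / C * B / P * (C * x * P)).
    - apply Rmult_le_compat_l; auto. unfold Rdiv. repeat apply Rmult_le_pos; try lra.
      apply Rlt_le, Rinv_0_lt_compat; lra. apply Rlt_le, Rinv_0_lt_compat; lra.
    - right. field. lra. }
  split.
  - rewrite Rmult_plus_distr_r. lra.
  - rewrite Rmult_minus_distr_r. lra.
Qed.

Lemma geom_eps q : 0 <= q < 1 -> forall eps, 0 < eps -> exists N, forall n, (N <= n)%nat -> q ^ n < eps.
Proof.
  intros Hq eps He. destruct (pow_lt_1_zero q ltac:(rewrite Rabs_right; lra) eps He) as (N & HN).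
  exists N. intros n Hn. pose proof (HN n Hn). rewrite Rabs_right in H; auto.
  apply Rle_ge, pow_le; lra.
Qed.

Lemma lim_bound (u : nat -> R) (l : R) K q : 0 <= q < 1 -> (forall n, Rabs (u n - l) <= K * q ^ n) -> is_lim_seq u l.
Proof.
  intros Hq Hb. apply is_lim_seq_spec. intros eps.
  destruct (geom_eps q Hq (eps / (Rabs K + 1))) as (N & HN).
  { apply Rdiv_lt_0_compat. apply cond_pos. pose proof (Rabs_pos K); lra. }
  exists N. intros n Hn. eapply Rle_lt_trans. apply Hb.
  pose proof (HN n Hn). pose proof (pow_le q n (proj1 Hq)). pose proof (Rabs_pos K).
  pose proof (Rle_abs K). pose proof (cond_pos eps).
  apply Rle_lt_trans with (Rabs K * q ^ n). apply Rmult_le_compat_r; auto.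
  apply Rle_lt_trans with ((Rabs K + 1) * q ^ n). nra.
  replace (pos eps) with ((Rabs K + 1) * (eps / (Rabs K + 1))) by (field; lra).
  apply Rmult_lt_compat_l; lra.
Qed.

Lemma cauchy_lim (u : nat -> R) :
  (forall eps, 0 < eps -> exists N, forall n m, (N <= n)%nat -> (N <= m)%nat -> Rabs (u n - u m) < eps) ->
  is_lim_seq u (real (Lim_seq u)).
Proof.
  intros H.
  assert (Hc : ex_lim_seq_cauchy u).
  { intros eps. destruct (H eps (cond_pos eps)) as (N & HN). exists N. auto. }
  apply ex_lim_seq_cauchy_corr in Hc. destruct Hc as (l & Hl).
  rewrite (is_lim_seq_unique _ _ Hl). exact Hl.
Qed.

Lemma lim_le (u : nat -> R) (l : R) a N : is_lim_seq u l -> (forall n, (N <= n)%nat -> u n <= a) -> l <= a.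
Proof.
  intros Hl Hu.
  apply (is_lim_seq_incr_n u N) in Hl.
  assert (Rbar_le l a).
  { apply (is_lim_seq_le (fun n => u (n + N)%nat) (fun _ => a)); auto.
    intros n; apply Hu; lia. apply is_lim_seq_const. }
  exact H.
Qed.

Lemma lim_ge (u : nat -> R) (l : R) a N : is_lim_seq u l -> (forall n, (N <= n)%nat -> a <= u n) -> a <= l.
Proof.
  intros Hl Hu.
  apply (is_lim_seq_incr_n u N) in Hl.
  assert (Rbar_le a l).
  { apply (is_lim_seq_le (fun _ => a) (fun n => u (n + N)%nat)); auto.
    intros n; apply Hu; lia. apply is_lim_seq_const. }
  exact H.
Qed.

Lemma pow_decr q n N : 0 <= q <= 1 -> (N <= n)%nat -> q ^ n <= q ^ N.
Proof.
  intros Hq Hn. induction Hn. lra.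
  simpl. pose proof (pow_le q m (proj1 Hq)). nra.
Qed.

Lemma KB_le G L c C : 0 < L -> KB G L c C -> c <= C.
Proof.
  intros HL (Hc & HC & Hb). destruct (Hb L L ltac:(lra) ltac:(lra)).
  assert (c * (L * L) <= C * (L * L)) by lra.
  apply Rmult_le_reg_r with (L * L); nra.
Qed.

Lemma brk_exists G L c C : kernel_hyp G -> 0 < L -> KB G L c C -> forall n,
  exists m M, c * Qc L <= m /\ m <= M /\ M <= C * Qc L /\
    M - m <= (1 - c / C) ^ n * (C * Qc L - c * Qc L) /\ brk G L n m M.
Proof.
  intros H HL HK. pose proof (KB_le G L c C HL HK) as HcC.
  assert (HK' := HK). destruct HK' as (Hc & HC & _).
  pose proof (Qc_pos L HL) as HQ.
  assert (Ht : 0 < c / C <= 1).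
  { split. apply Rdiv_lt_0_compat; auto. apply Rmult_le_reg_r with C; auto. unfold Rdiv.
    rewrite Rmult_assoc, Rinv_l; lra. }
  induction n.
  - exists (c * Qc L), (C * Qc L).
    split; [lra|]. split; [apply Rmult_le_compat_r; lra|]. split; [lra|]. split; [simpl; lra|].
    apply brk0; auto.
  - destruct IHn as (m & M & H1 & H2 & H3 & H4 & H5).
    destruct (brk_step G L c C n m M H HL HK H5 H2) as (HA & HB & HAB & Hb).
    set (A := Pw L (fun y => itf G L (S n) y - m * itf G L n y)) in *.
    set (B := Pw L (fun y => M * itf G L n y - itf G L (S n) y)) in *.
    pose proof (Pn_pos G L c C n H HL HK) as HP.
    set (P := Pn G L n) in *.
    exists (m + c / C * A / P), (M - c / C * B / P).
    assert (E : M - c / C * B / P - (m + c / C * A / P) = (1 - c / C) * (M - m)).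
    { replace (M - c / C * B / P - (m + c / C * A / P)) with (M - m - c / C * ((A + B) / P)) by (field; lra).
      rewrite HAB. field. lra. }
    assert (X1 : 0 <= c / C * A / P). { unfold Rdiv at 2. apply Rmult_le_pos. apply Rmult_le_pos; lra. apply Rlt_le, Rinv_0_lt_compat; lra. }
    assert (X2 : 0 <= c / C * B / P). { unfold Rdiv at 2. apply Rmult_le_pos. apply Rmult_le_pos; lra. apply Rlt_le, Rinv_0_lt_compat; lra. }
    assert (X3 : 0 <= (1 - c / C) * (M - m)) by (apply Rmult_le_pos; lra).
    split; [lra|]. split; [lra|]. split; [lra|]. split.
    + rewrite E. simpl. rewrite Rmult_assoc. apply Rmult_le_compat_l; lra.
    + exact Hb.
Qed.

Definition sq G L n := Pn G L (S n) / Pn G L n.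

Lemma sq_brk G L c C n m M : kernel_hyp G -> 0 < L -> KB G L c C -> brk G L n m M -> m <= sq G L n <= M.
Proof.
  intros H HL HK Hb. pose proof (Pn_pos G L c C n H HL HK) as HP. unfold sq.
  assert (Hl : 0 <= L) by lra.
  pose proof (itf_cont G L n H HL) as C0. pose proof (itf_cont G L (S n) H HL) as C1.
  assert (Cm : forall k, contR (fun y => k * itf G L n y)) by (intros k z; apply cR_mult; [apply cR_const|apply C0]).
  assert (m * Pn G L n <= Pn G L (S n)).
  { unfold Pn. rewrite <- Pw_scal by auto. apply Pw_mono; auto. intros y Hy; apply Hb; auto. }
  assert (Pn G L (S n) <= M * Pn G L n).
  { unfold Pn. rewrite <- Pw_scal by auto. apply Pw_mono; auto. intros y Hy; apply Hb; auto. }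
  split.
  - apply Rmult_le_reg_r with (Pn G L n); auto. unfold Rdiv. rewrite Rmult_assoc, Rinv_l; lra.
  - apply Rmult_le_reg_r with (Pn G L n); auto. unfold Rdiv. rewrite Rmult_assoc, Rinv_l; lra.
Qed.

Lemma Pn_brk G L c C n m M : kernel_hyp G -> 0 < L -> KB G L c C -> brk G L n m M ->
  m * Pn G L n <= Pn G L (S n) <= M * Pn G L n.
Proof.
  intros H HL HK Hb.
  assert (Hl : 0 <= L) by lra.
  pose proof (itf_cont G L n H HL) as C0. pose proof (itf_cont G L (S n) H HL) as C1.
  assert (Cm : forall k, contR (fun y => k * itf G L n y)) by (intros k z; apply cR_mult; [apply cR_const|apply C0]).
  split.
  - unfold Pn. rewrite <- Pw_scal by auto. apply Pw_mono; auto. intros y Hy; apply Hb; auto.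
  - unfold Pn. rewrite <- Pw_scal by auto. apply Pw_mono; auto. intros y Hy; apply Hb; auto.
Qed.

Definition rr G L := real (Lim_seq (sq G L)).

Lemma sq_lim G L c C : kernel_hyp G -> 0 < L -> KB G L c C -> is_lim_seq (sq G L) (rr G L).
Proof.
  intros H HL HK. apply cauchy_lim. intros eps He.
  pose proof (KB_le G L c C HL HK) as HcC. assert (HK' := HK). destruct HK' as (Hc & HC & _).
  assert (Hq : 0 <= 1 - c / C < 1).
  { assert (c / C <= 1). { apply Rmult_le_reg_r with C; auto. unfold Rdiv. rewrite Rmult_assoc, Rinv_l; lra. }
    pose proof (Rdiv_lt_0_compat c C Hc HC). lra. }
  set (D := C * Qc L - c * Qc L).
  assert (HD : 0 <= D) by (unfold D; pose proof (Qc_pos L HL); nra).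
  destruct (geom_eps _ Hq (eps / (D + 1))) as (N & HN). apply Rdiv_lt_0_compat; lra.
  destruct (brk_exists G L c C H HL HK N) as (m & M & _ & _ & _ & HmM & Hb).
  exists N. intros n k Hn Hk.
  destruct (sq_brk G L c C n m M H HL HK (brk_later G L N m M H HL Hb n Hn)).
  destruct (sq_brk G L c C k m M H HL HK (brk_later G L N m M H HL Hb k Hk)).
  pose proof (HN N (Nat.le_refl N)).
  assert ((1 - c / C) ^ N * D <= eps / (D + 1) * D) by (apply Rmult_le_compat_r; lra).
  assert (eps / (D + 1) * D < eps).
  { replace eps with (eps / (D + 1) * (D + 1)) at 2 by (field; lra).
    apply Rmult_lt_compat_l. apply Rdiv_lt_0_compat; lra. lra. }
  fold D in HmM. apply Rabs_def1; lra.
Qed.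

Lemma rr_brk G L c C n m M : kernel_hyp G -> 0 < L -> KB G L c C -> brk G L n m M -> m <= rr G L <= M.
Proof.
  intros H HL HK Hb. pose proof (sq_lim G L c C H HL HK) as Hl. split.
  - apply (lim_ge _ _ _ n Hl). intros k Hk. apply (sq_brk G L c C k m M H HL HK). apply (brk_later G L n); auto.
  - apply (lim_le _ _ _ n Hl). intros k Hk. apply (sq_brk G L c C k m M H HL HK). apply (brk_later G L n); auto.
Qed.

Definition gn G L n x := itf G L n x / Pn G L n.

Lemma gn_cont G L c C n : kernel_hyp G -> 0 < L -> KB G L c C -> contR (gn G L n).
Proof.
  intros H HL HK x. unfold gn. apply cR_mult. apply itf_cont; auto. apply cR_const.
Qed.

Lemma gn_bounds G L c C n x : kernel_hyp G -> 0 < L -> KB G L c C -> 0 <= x <= L ->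
  c / (C * Qc L) * x <= gn G L n x <= C / (c * Qc L) * x.
Proof.
  intros H HL HK Hx. pose proof (KB_le G L c C HL HK) as HcC. assert (HK' := HK). destruct HK' as (Hc & HC & _).
  pose proof (Qc_pos L HL) as HQ.
  assert (R1 : c / (C * Qc L) <= 1 / Qc L).
  { unfold Rdiv. rewrite Rinv_mult. rewrite <- Rmult_assoc. apply Rmult_le_compat_r.
    apply Rlt_le, Rinv_0_lt_compat; auto. apply Rmult_le_reg_r with C; auto. rewrite Rmult_assoc, Rinv_l; lra. }
  assert (R2 : 1 / Qc L <= C / (c * Qc L)).
  { unfold Rdiv. rewrite Rinv_mult. rewrite <- Rmult_assoc. apply Rmult_le_compat_r.
    apply Rlt_le, Rinv_0_lt_compat; auto. apply Rmult_le_reg_r with c; auto. rewrite Rmult_assoc, Rinv_l; lra. }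
  unfold gn. destruct n as [|n].
  - simpl. unfold Pn. simpl. fold (Qc L).
    replace (x / Qc L) with (1 / Qc L * x) by (field; lra). split; apply Rmult_le_compat_r; lra.
  - pose proof (Pn_pos G L c C n H HL HK) as HP. pose proof (Pn_bounds G L c C n H HL HK) as [B1 B2].
    pose proof (Pn_pos G L c C (S n) H HL HK) as HP'.
    destruct (Hk_lowup G L c C (itf G L n) x H HL HK (itf_cont G L n H HL) (itf_pos G L n H HL) Hx) as [K1 K2].
    change (Hk G L (itf G L n) x) with (itf G L (S n) x) in K1, K2.
    fold (Pn G L n) in K1, K2.
    set (a := itf G L (S n) x) in *. set (P := Pn G L n) in *. set (P' := Pn G L (S n)) in *.
    split.
    + apply Rmult_le_reg_r with P'; auto. unfold Rdiv. rewrite (Rmult_assoc a), Rinv_l, Rmult_1_r by lra.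
      apply Rle_trans with (c * x * P); auto.
      apply Rle_trans with (c * / (C * Qc L) * x * (C * Qc L * P)).
      * apply Rmult_le_compat_l; auto. apply Rmult_le_pos; [|lra]. apply Rmult_le_pos; [lra|].
        apply Rlt_le, Rinv_0_lt_compat. apply Rmult_lt_0_compat; lra.
      * right. field. split; lra.
    + apply Rmult_le_reg_r with P'; auto. unfold Rdiv. rewrite (Rmult_assoc a), Rinv_l, Rmult_1_r by lra.
      apply Rle_trans with (C * x * P); auto.
      apply Rle_trans with (C * / (c * Qc L) * x * (c * Qc L * P)).
      * right. field. split; lra.
      * apply Rmult_le_compat_l; auto. apply Rmult_le_pos; [|lra]. apply Rmult_le_pos; [lra|].
        apply Rlt_le, Rinv_0_lt_compat. apply Rmult_lt_0_compat; lra.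
Qed.

Lemma ratio_lemma m M P P' a b : 0 < m -> m <= M -> 0 < P -> 0 <= a ->
  m * a <= b <= M * a -> m * P <= P' <= M * P ->
  Rabs (b / P' - a / P) <= (M - m) / m * (a / P).
Proof.
  intros Hm HmM HP Ha Hb HP'.
  assert (HP'' : 0 < P') by nra.
  set (z := a / P). set (y := b / P').
  assert (Ea : a = z * P) by (unfold z; field; lra).
  assert (Eb : b = y * P') by (unfold y; field; lra).
  assert (Hz : 0 <= z) by (unfold z; apply Rmult_le_pos; auto; apply Rlt_le, Rinv_0_lt_compat; auto).
  rewrite Ea, Eb in Hb.
  assert (Hy : 0 <= y).
  { assert (0 <= y * P') by (pose proof (Rmult_le_pos _ _ (Rlt_le _ _ Hm) (Rmult_le_pos _ _ Hz (Rlt_le _ _ HP))); lra).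
    destruct (Rle_dec 0 y); auto. assert (y * P' < 0) by (apply Rmult_neg_pos; lra). lra. }
  assert (U : y * m <= M * z).
  { apply Rmult_le_reg_r with P; auto. apply Rle_trans with (y * P').
    rewrite Rmult_assoc. apply Rmult_le_compat_l; lra. lra. }
  assert (Lo : m * z <= y * M).
  { apply Rmult_le_reg_r with P; auto. apply Rle_trans with (y * P').
    lra. rewrite Rmult_assoc. apply Rmult_le_compat_l; lra. }
  assert (U' : y - z <= (M - m) / m * z).
  { apply Rmult_le_reg_r with m; auto. unfold Rdiv. replace ((M - m) * / m * z * m) with ((M - m) * z) by (field; lra). nra. }
  assert (L' : z - y <= (M - m) / m * z).
  { apply Rmult_le_reg_r with m; auto. unfold Rdiv. replace ((M - m) * / m * z * m) with ((M - m) * z) by (field; lra).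
    assert (HM : 0 < M) by lra.
    assert (y >= m * z / M).
    { apply Rle_ge. apply Rmult_le_reg_r with M; auto. unfold Rdiv. rewrite Rmult_assoc, Rinv_l; lra. }
    assert (z * m - m * z * m / M <= (M - m) * z).
    { replace (z * m - m * z * m / M) with (z * m * (M - m) / M) by (field; lra).
      apply Rmult_le_reg_r with M; auto. unfold Rdiv. rewrite Rmult_assoc, Rinv_l by lra. nra. }
    assert ((z - y) * m <= z * m - m * z * m / M).
    { assert (y * m >= m * z / M * m) by nra. replace (m * z * m / M) with (m * z / M * m) by (field; lra). lra. }
    lra. }
  apply Rabs_le; lra.
Qed.

Definition Eg L c C := (C * Qc L - c * Qc L) / (c * Qc L) * (C / (c * Qc L)) * L.

Lemma consts G L c C : 0 < L -> KB G L c C ->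
  0 < c / C <= 1 /\ 0 <= 1 - c / C < 1 /\ 0 <= Eg L c C /\ 0 < Qc L /\ 0 < c /\ 0 < C /\ c <= C.
Proof.
  intros HL HK. pose proof (KB_le G L c C HL HK) as HcC. destruct HK as (Hc & HC & _).
  pose proof (Qc_pos L HL) as HQ.
  assert (c / C <= 1). { apply Rmult_le_reg_r with C; auto. unfold Rdiv. rewrite Rmult_assoc, Rinv_l; lra. }
  pose proof (Rdiv_lt_0_compat c C Hc HC).
  repeat split; try lra.
  unfold Eg. apply Rmult_le_pos; [|lra]. apply Rmult_le_pos.
  - apply Rmult_le_pos. nra. apply Rlt_le, Rinv_0_lt_compat. nra.
  - apply Rmult_le_pos. lra. apply Rlt_le, Rinv_0_lt_compat. nra.
Qed.

Lemma gn_step G L c C n x : kernel_hyp G -> 0 < L -> KB G L c C -> 0 <= x <= L ->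
  Rabs (gn G L (S n) x - gn G L n x) <= Eg L c C * (1 - c / C) ^ n.
Proof.
  intros H HL HK Hx.
  destruct (consts G L c C HL HK) as (Ht & Hq & HE & HQ & Hc & HC & HcC).
  destruct (brk_exists G L c C H HL HK n) as (m & M & Hm & HmM & HM & Hd & Hb).
  assert (Hm0 : 0 < m) by nra.
  pose proof (ratio_lemma m M (Pn G L n) (Pn G L (S n)) (itf G L n x) (itf G L (S n) x) Hm0 HmM
    (Pn_pos G L c C n H HL HK) (itf_pos G L n H HL x Hx) (Hb x Hx) (Pn_brk G L c C n m M H HL HK Hb)) as R.
  fold (gn G L n x) in R. fold (gn G L (S n) x) in R.
  eapply Rle_trans; [exact R|].
  destruct (gn_bounds G L c C n x H HL HK Hx) as [_ Bu].
  assert (Hg0 : 0 <= gn G L n x).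
  { unfold gn. apply Rmult_le_pos. apply itf_pos; auto. apply Rlt_le, Rinv_0_lt_compat, (Pn_pos G L c C n H HL HK). }
  assert (Bu' : gn G L n x <= C / (c * Qc L) * L).
  { eapply Rle_trans; [exact Bu|]. apply Rmult_le_compat_l; [|lra]. apply Rlt_le, Rdiv_lt_0_compat; nra. }
  assert (R1 : (M - m) / m <= (1 - c / C) ^ n * (C * Qc L - c * Qc L) / (c * Qc L)).
  { unfold Rdiv. apply Rle_trans with ((M - m) * / (c * Qc L)).
    - apply Rmult_le_compat_l; [lra|]. apply Rinv_le_contravar; nra.
    - apply Rmult_le_compat_r; [apply Rlt_le, Rinv_0_lt_compat; nra| lra]. }
  assert (R2 : 0 <= (M - m) / m) by (apply Rmult_le_pos; [lra|apply Rlt_le, Rinv_0_lt_compat; lra]).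
  apply Rle_trans with ((1 - c / C) ^ n * (C * Qc L - c * Qc L) / (c * Qc L) * (C / (c * Qc L) * L)).
  - apply Rmult_le_compat; auto.
  - right. unfold Eg. field. nra.
Qed.

Lemma gn_tele G L c C n j x : kernel_hyp G -> 0 < L -> KB G L c C -> 0 <= x <= L ->
  Rabs (gn G L (n + j) x - gn G L n x) <= Eg L c C * (1 - c / C) ^ n * (1 - (1 - c / C) ^ j) / (c / C).
Proof.
  intros H HL HK Hx.
  destruct (consts G L c C HL HK) as (Ht & Hq & HE & HQ & Hc & HC & HcC).
  induction j.
  - rewrite Nat.add_0_r. unfold Rminus at 1. rewrite Rplus_opp_r, Rabs_R0. simpl.
    right. field. lra.
  - rewrite Nat.add_succ_r.
    replace (gn G L (S (n + j)) x - gn G L n x) with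
      ((gn G L (S (n + j)) x - gn G L (n + j) x) + (gn G L (n + j) x - gn G L n x)) by ring.
    eapply Rle_trans; [apply Rabs_triang|].
    pose proof (gn_step G L c C (n + j) x H HL HK Hx).
    rewrite pow_add in H0.
    apply Rle_trans with (Eg L c C * ((1 - c / C) ^ n * (1 - c / C) ^ j) +
                          Eg L c C * (1 - c / C) ^ n * (1 - (1 - c / C) ^ j) / (c / C)).
    + lra.
    + right. simpl. field. lra.
Qed.

Lemma gn_tele' G L c C n k x : kernel_hyp G -> 0 < L -> KB G L c C -> 0 <= x <= L -> (n <= k)%nat ->
  Rabs (gn G L k x - gn G L n x) <= Eg L c C * (1 - c / C) ^ n / (c / C).
Proof.
  intros H HL HK Hx Hk.
  destruct (consts G L c C HL HK) as (Ht & Hq & HE & HQ & Hc & HC & HcC).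
  replace k with (n + (k - n))%nat by lia.
  eapply Rle_trans; [apply (gn_tele G L c C n (k - n) x H HL HK Hx)|].
  unfold Rdiv. apply Rmult_le_compat_r; [apply Rlt_le, Rinv_0_lt_compat; lra|].
  pose proof (pow_le (1 - c / C) (k - n) (proj1 Hq)). pose proof (pow_le (1 - c / C) n (proj1 Hq)).
  assert (0 <= Eg L c C * (1 - c / C) ^ n) by (apply Rmult_le_pos; auto).
  pose proof (pow_decr (1 - c / C) (k - n) 0 ltac:(lra) ltac:(lia)). simpl in H3. nra.
Qed.

Definition gl G L x := real (Lim_seq (fun n => gn G L n x)).

Lemma gl_lim G L c C x : kernel_hyp G -> 0 < L -> KB G L c C -> 0 <= x <= L ->
  is_lim_seq (fun n => gn G L n x) (gl G L x).
Proof.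
  intros H HL HK Hx.
  destruct (consts G L c C HL HK) as (Ht & Hq & HE & HQ & Hc & HC & HcC).
  apply cauchy_lim. intros eps He.
  destruct (geom_eps _ Hq (eps * (c / C) / (2 * Eg L c C + 1))) as (N & HN).
  { apply Rdiv_lt_0_compat. apply Rmult_lt_0_compat; lra. lra. }
  exists N. intros n k Hn Hk.
  pose proof (gn_tele' G L c C N n x H HL HK Hx Hn).
  pose proof (gn_tele' G L c C N k x H HL HK Hx Hk).
  replace (gn G L n x - gn G L k x) with ((gn G L n x - gn G L N x) - (gn G L k x - gn G L N x)) by ring.
  eapply Rle_lt_trans; [apply abs_sub_le|].
  pose proof (HN N (Nat.le_refl N)).
  set (q := (1 - c / C) ^ N) in *.
  assert (Hq0 : 0 <= q) by (apply pow_le; lra).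
  assert (2 * (Eg L c C * q / (c / C)) < eps).
  { apply Rmult_lt_reg_r with (c / C); [lra|].
    replace (2 * (Eg L c C * q / (c / C)) * (c / C)) with (2 * Eg L c C * q) by (field; lra).
    apply Rle_lt_trans with ((2 * Eg L c C + 1) * q). nra.
    replace (eps * (c / C)) with ((2 * Eg L c C + 1) * (eps * (c / C) / (2 * Eg L c C + 1))) by (field; lra).
    apply Rmult_lt_compat_l; lra. }
  lra.
Qed.

Lemma gl_close G L c C n x : kernel_hyp G -> 0 < L -> KB G L c C -> 0 <= x <= L ->
  Rabs (gl G L x - gn G L n x) <= Eg L c C * (1 - c / C) ^ n / (c / C).
Proof.
  intros H HL HK Hx. pose proof (gl_lim G L c C x H HL HK Hx) as Hl.
  apply Rabs_le. split.
  - assert (gn G L n x - Eg L c C * (1 - c / C) ^ n / (c / C) <= gl G L x); [|lra].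
    apply (lim_ge _ _ _ n Hl). intros k Hk. pose proof (gn_tele' G L c C n k x H HL HK Hx Hk).
    apply Rabs_le_between' in H0. lra.
  - assert (gl G L x <= gn G L n x + Eg L c C * (1 - c / C) ^ n / (c / C)); [|lra].
    apply (lim_le _ _ _ n Hl). intros k Hk. pose proof (gn_tele' G L c C n k x H HL HK Hx Hk).
    apply Rabs_le_between' in H0. lra.
Qed.

Lemma gl_bounds G L c C x : kernel_hyp G -> 0 < L -> KB G L c C -> 0 <= x <= L ->
  c / (C * Qc L) * x <= gl G L x <= C / (c * Qc L) * x.
Proof.
  intros H HL HK Hx. pose proof (gl_lim G L c C x H HL HK Hx) as Hl. split.
  - apply (lim_ge _ _ _ 0 Hl). intros k _. apply (gn_bounds G L c C k x H HL HK Hx).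
  - apply (lim_le _ _ _ 0 Hl). intros k _. apply (gn_bounds G L c C k x H HL HK Hx).
Qed.

Definition clamp (L x : R) := Rmax 0 (Rmin x L).

Lemma clamp_in L x : 0 <= L -> 0 <= clamp L x <= L.
Proof.
  intros HL. unfold clamp, Rmax, Rmin. destruct (Rle_dec x L); destruct (Rle_dec 0 _); lra.
Qed.

Lemma clamp_id L x : 0 <= x <= L -> clamp L x = x.
Proof.
  intros Hx. unfold clamp, Rmax, Rmin. destruct (Rle_dec x L); destruct (Rle_dec 0 _); lra.
Qed.

Lemma clamp_lip L x y : 0 <= L -> Rabs (clamp L y - clamp L x) <= Rabs (y - x).
Proof.
  intros HL. unfold clamp, Rmax, Rmin.
  destruct (Rle_dec y L); destruct (Rle_dec x L); destruct (Rle_dec 0 y); destruct (Rle_dec 0 x);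
  destruct (Rle_dec 0 L); try lra;
  repeat match goal with |- context [Rle_dec ?a ?b] => destruct (Rle_dec a b) end;
  apply Rabs_le; pose proof (Rle_abs (y - x)); pose proof (Rle_abs (- (y - x))); rewrite Rabs_Ropp in *; lra.
Qed.

Definition gt G L x := gl G L (clamp L x).

Lemma gt_cont G L c C : kernel_hyp G -> 0 < L -> KB G L c C -> contR (gt G L).
Proof.
  intros H HL HK x.
  destruct (consts G L c C HL HK) as (Ht & Hq & HE & HQ & Hc & HC & HcC).
  apply cont_of_eps. intros eps He.
  destruct (geom_eps _ Hq (eps / 3 * (c / C) / (Eg L c C + 1))) as (N & HN).
  { apply Rdiv_lt_0_compat. apply Rmult_lt_0_compat; lra. lra. }
  pose proof (HN N (Nat.le_refl N)) as HN'.
  set (q := (1 - c / C) ^ N) in *.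
  assert (Hq0 : 0 <= q) by (apply pow_le; lra).
  assert (K : Eg L c C * q / (c / C) < eps / 3).
  { apply Rmult_lt_reg_r with (c / C); [lra|].
    replace (Eg L c C * q / (c / C) * (c / C)) with (Eg L c C * q) by (field; lra).
    apply Rle_lt_trans with ((Eg L c C + 1) * q). nra.
    replace (eps / 3 * (c / C)) with ((Eg L c C + 1) * (eps / 3 * (c / C) / (Eg L c C + 1))) by (field; lra).
    apply Rmult_lt_compat_l; lra. }
  destruct (cont_eps _ _ (gn_cont G L c C N H HL HK (clamp L x)) (eps / 3) ltac:(lra)) as (d & Hd & Hd').
  exists d. split; auto. intros y Hy.
  assert (Hl : 0 <= L) by lra.
  pose proof (gl_close G L c C N (clamp L y) H HL HK (clamp_in L y Hl)).
  pose proof (gl_close G L c C N (clamp L x) H HL HK (clamp_in L x Hl)).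
  pose proof (Hd' (clamp L y) ltac:(pose proof (clamp_lip L x y Hl); lra)).
  fold q in H0, H1. unfold gt.
  replace (gl G L (clamp L y) - gl G L (clamp L x)) with
    ((gl G L (clamp L y) - gn G L N (clamp L y)) + (gn G L N (clamp L y) - gn G L N (clamp L x))
     - (gl G L (clamp L x) - gn G L N (clamp L x))) by ring.
  eapply Rle_lt_trans; [apply abs_sub_le|].
  pose proof (Rabs_triang (gl G L (clamp L y) - gn G L N (clamp L y)) (gn G L N (clamp L y) - gn G L N (clamp L x))).
  lra.
Qed.

Lemma Hk_gn G L c C n x : kernel_hyp G -> 0 < L -> KB G L c C ->
  Hk G L (gn G L n) x = sq G L n * gn G L (S n) x.
Proof.
  intros H HL HK. pose proof (Pn_pos G L c C n H HL HK). pose proof (Pn_pos G L c C (S n) H HL HK).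
  unfold gn at 1. rewrite (Hk_ext G L _ (fun y => / Pn G L n * itf G L n y)).
  2: lra. 2:{ intros; unfold Rdiv; ring. }
  rewrite Hk_scal; [|auto|lra|apply itf_cont; auto].
  change (Hk G L (itf G L n) x) with (itf G L (S n) x).
  unfold sq, gn. field. split; lra.
Qed.

Lemma eigen_eq G L c C x : kernel_hyp G -> 0 < L -> KB G L c C -> 0 <= x <= L ->
  Hk G L (gt G L) x = rr G L * gl G L x.
Proof.
  intros H HL HK Hx.
  destruct (consts G L c C HL HK) as (Ht & Hq & HE & HQ & Hc & HC & HcC).
  assert (Hl : 0 <= L) by lra.
  assert (L1 : is_lim_seq (fun n => Hk G L (gn G L n) x) (Hk G L (gt G L) x)).
  { apply (lim_bound _ _ (L * (C * L * L) * (Eg L c C / (c / C))) (1 - c / C) Hq).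
    intros n. rewrite <- Rabs_Ropp, Ropp_minus_distr.
    rewrite <- Hk_minus; auto. 2: apply (gt_cont G L c C); auto. 2: apply (gn_cont G L c C); auto.
    unfold Hk, Kop.
    replace (L * (C * L * L) * (Eg L c C / (c / C)) * (1 - c / C) ^ n) with
      ((L - 0) * (C * L * L * (Eg L c C * (1 - c / C) ^ n / (c / C)))) by (field; lra).
    apply rint_abs_le; auto.
    - apply Kop_ex; auto. apply kern_cont, hG_cont, H.
      intros z; apply cR_minus. apply (gt_cont G L c C); auto. apply (gn_cont G L c C); auto.
    - intros y Hy. rewrite Rabs_mult.
      assert (HK2 := HK). destruct HK2 as (_ & _ & Hb). destruct (Hb x y Hx Hy).
      assert (Kp : 0 <= G (x - y) - G (x + y)) by (pose proof (Rmult_le_pos _ _ (Rmult_le_pos _ _ (Rlt_le _ _ Hc) (proj1 Hx)) (proj1 Hy)); lra).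
      unfold kern. rewrite (Rabs_right (G (x - y) - G (x + y))) by lra.
      apply Rmult_le_compat; [exact Kp|apply Rabs_pos| |].
      + apply Rle_trans with (C * x * y); [lra|].
        assert (x * y <= L * L) by (apply Rmult_le_compat; lra).
        rewrite !Rmult_assoc. apply Rmult_le_compat_l; lra.
      + unfold gt. rewrite clamp_id by auto. apply gl_close; auto. }
  assert (L2 : is_lim_seq (fun n => sq G L n * gn G L (S n) x) (rr G L * gl G L x)).
  { apply is_lim_seq_mult'. apply (sq_lim G L c C); auto.
    apply (is_lim_seq_incr_1 (fun n => gn G L n x)). apply (gl_lim G L c C); auto. }
  apply (is_lim_seq_ext _ _ _ (fun n => Hk_gn G L c C n x H HL HK)) in L1.
  apply is_lim_seq_unique in L1. apply is_lim_seq_unique in L2.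
  rewrite L1 in L2. injection L2. auto.
Qed.

Lemma eig_exists G L : kernel_hyp G -> 0 < L ->
  exists r w, 0 < r /\ contR w /\ (exists a b, 0 < a /\ forall x, 0 <= x <= L -> a * x <= w x <= b * x) /\
    forall x, 0 <= x <= L -> Hk G L w x = r * w x.
Proof.
  intros H HL.
  destruct (kernel_bounds G H L HL) as (c & C & Hc & HC & Hb).
  assert (HK : KB G L c C) by (split; auto).
  destruct (consts G L c C HL HK) as (Ht & Hq & HE & HQ & _ & _ & HcC).
  exists (rr G L), (gt G L). split.
  { destruct (rr_brk G L c C 0 _ _ H HL HK (brk0 G L c C H HL HK)). nra. }
  split. apply (gt_cont G L c C); auto.
  split.
  - exists (c / (C * Qc L)), (C / (c * Qc L)). split. apply Rdiv_lt_0_compat; nra.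
    intros x Hx. unfold gt. rewrite clamp_id by auto. apply gl_bounds; auto.
  - intros x Hx. rewrite eigen_eq with (c := c) (C := C) by auto. unfold gt. rewrite clamp_id; auto.
Qed.

Lemma cont_on_clamp L f : 0 <= L -> cont_on 0 L f -> contR (fun x => f (clamp L x)).
Proof.
  intros HL Hf x. apply cont_of_eps. intros eps He.
  destruct (Hf (clamp L x) (clamp_in L x HL) eps He) as (d & Hd & Hd').
  exists d. split; auto. intros y Hy. apply Hd'. apply clamp_in; auto.
  pose proof (clamp_lip L x y HL). lra.
Qed.

Lemma C1_clamp L u : 0 < L -> C1_on 0 L u -> contR (fun x => u (clamp L x)).
Proof.
  intros HL (df & Hdf & Hu).
  assert (Hl : 0 <= L) by lra.
  set (dft := fun x => df (clamp L x)).
  assert (Cd : contR dft) by (apply cont_on_clamp; auto).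
  destruct (cont_bound dft 0 L Hl) as (M & HM & HM'). { intros; apply Cd. }
  assert (E : forall t, 0 <= t <= L -> u t = u 0 + RInt dft 0 t).
  { intros t Ht. rewrite Hu by auto. f_equal. apply rint_ext; [lra|]. intros y Hy. unfold dft. rewrite clamp_id; auto; lra. }
  assert (Lip : forall s t, 0 <= s <= L -> 0 <= t <= L -> s <= t -> Rabs (u t - u s) <= M * (t - s)).
  { intros s t Hs Ht Hst. rewrite (E t Ht), (E s Hs).
    rewrite <- (rint_chasles dft 0 s t).
    - assert (Ex : u 0 + (RInt dft 0 s + RInt dft s t) - (u 0 + RInt dft 0 s) = RInt dft s t) by ring.
      rewrite Ex.
      replace (M * (t - s)) with ((t - s) * M) by ring.
      apply rint_abs_le; auto. apply exr_cont; auto. intros; apply HM'; lra.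
    - apply exr_cont; try lra. auto.
    - apply exr_cont; try lra. auto. }
  intros x. apply cont_of_eps. intros eps He.
  exists (eps / (M + 1)). split. apply Rdiv_lt_0_compat; lra.
  intros y Hy.
  pose proof (clamp_in L x Hl). pose proof (clamp_in L y Hl). pose proof (clamp_lip L x y Hl).
  assert (Rabs (u (clamp L y) - u (clamp L x)) <= M * Rabs (clamp L y - clamp L x)).
  { destruct (Rle_dec (clamp L x) (clamp L y)).
    - rewrite (Rabs_right (clamp L y - clamp L x)) by lra. apply Lip; auto.
    - rewrite Rabs_minus_sym, (Rabs_minus_sym (clamp L y)).
      rewrite (Rabs_right (clamp L x - clamp L y)) by lra. apply Lip; auto; lra. }
  apply Rle_lt_trans with (M * Rabs (y - x)).
  - eapply Rle_trans; [exact H2|]. apply Rmult_le_compat_l; auto.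
  - apply Rle_lt_trans with ((M + 1) * Rabs (y - x)). pose proof (Rabs_pos (y - x)); nra.
    replace eps with ((M + 1) * (eps / (M + 1))) by (field; lra).
    apply Rmult_lt_compat_l; lra.
Qed.

Lemma pos_int f a b x0 : contR f -> (forall y, a <= y <= b -> 0 <= f y) -> a < x0 <= b -> 0 < f x0 ->
  0 < RInt f a b.
Proof.
  intros Hf Hp Hx Hx0.
  destruct (cont_eps f x0 (Hf x0) (f x0 / 2) ltac:(lra)) as (d & Hd & Hd').
  set (a' := Rmax a (x0 - d / 2)).
  assert (Ha' : a <= a' < x0) by (unfold a'; unfold Rmax; destruct (Rle_dec a (x0 - d / 2)); lra).
  assert (Ha2 : x0 - d / 2 <= a') by apply Rmax_r.
  rewrite <- (rint_chasles f a a' b); try (apply exr_cont; [lra| intros; apply Hf]).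
  rewrite <- (rint_chasles f a' x0 b); try (apply exr_cont; [lra| intros; apply Hf]).
  assert (0 <= RInt f a a') by (apply rint_nonneg; [lra|apply exr_cont; [lra|intros; apply Hf]|intros; apply Hp; lra]).
  assert (0 <= RInt f x0 b) by (apply rint_nonneg; [lra|apply exr_cont; [lra|intros; apply Hf]|intros; apply Hp; lra]).
  assert (0 < RInt f a' x0).
  { apply RInt_gt_0; [lra| |intros; apply Hf].
    intros y Hy. pose proof (Hd' y). assert (Rabs (y - x0) < d) by (apply Rabs_def1; lra).
    apply H1 in H2. apply Rabs_def2 in H2. lra. }
  lra.
Qed.

Lemma pow_unb t B : 1 < t -> exists n, B < t ^ n.
Proof.
  intros Ht. pose proof (is_lim_seq_geom_p t Ht) as Hl.
  apply is_lim_seq_spec in Hl. destruct (Hl B) as (N & HN). exists N. apply HN. lia.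
Qed.

Lemma iter_compare G L f g al be ka : kernel_hyp G -> 0 < L -> contR f -> contR g ->
  0 <= al -> 0 <= be -> 0 <= ka ->
  (forall x, 0 <= x <= L -> Hk G L f x <= al * f x) ->
  (forall x, 0 <= x <= L -> be * g x <= Hk G L g x) ->
  (forall x, 0 <= x <= L -> ka * g x <= f x) ->
  forall n x, 0 <= x <= L -> ka * be ^ n * g x <= al ^ n * f x.
Proof.
  intros H HL Hf Hg Hal Hbe Hka Hf1 Hg1 Hfg n. induction n; intros x Hx.
  - simpl. rewrite !Rmult_1_r, Rmult_1_l. auto.
  - simpl.
    assert (Hc1 : contR (fun y => ka * be ^ n * g y)) by (intros z; apply cR_mult; [apply cR_const|apply Hg]).
    assert (Hc2 : contR (fun y => al ^ n * f y)) by (intros z; apply cR_mult; [apply cR_const|apply Hf]).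
    pose proof (pow_le be n Hbe). pose proof (pow_le al n Hal).
    apply Rle_trans with (ka * be ^ n * Hk G L g x).
    + replace (ka * (be * be ^ n) * g x) with (ka * be ^ n * (be * g x)) by ring.
      apply Rmult_le_compat_l. apply Rmult_le_pos; auto. apply Hg1; auto.
    + rewrite <- Hk_scal; auto; try lra.
      apply Rle_trans with (Hk G L (fun y => al ^ n * f y) x).
      * apply Hk_mono; auto.
      * rewrite Hk_scal; auto; try lra. replace (al * al ^ n * f x) with (al ^ n * (al * f x)) by ring.
        apply Rmult_le_compat_l; auto.
Qed.

Lemma compare_conclude G L f g al be ka x0 : kernel_hyp G -> 0 < L -> contR f -> contR g ->
  0 <= al -> 0 <= be -> 0 < ka ->
  (forall x, 0 <= x <= L -> Hk G L f x <= al * f x) ->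
  (forall x, 0 <= x <= L -> be * g x <= Hk G L g x) ->
  (forall x, 0 <= x <= L -> ka * g x <= f x) ->
  0 <= x0 <= L -> 0 < g x0 -> be <= al.
Proof.
  intros H HL Hf Hg Hal Hbe Hka Hf1 Hg1 Hfg Hx0 Hg0.
  pose proof (iter_compare G L f g al be ka H HL Hf Hg Hal Hbe (Rlt_le _ _ Hka) Hf1 Hg1 Hfg) as It.
  destruct (Rle_dec be al) as [|Hn]; auto. exfalso.
  destruct (Req_dec al 0) as [E|Hne].
  - pose proof (It 1%nat x0 Hx0). rewrite E in H0. simpl in H0.
    assert (0 < ka * (be * 1) * g x0) by (repeat apply Rmult_lt_0_compat; lra). lra.
  - assert (Ht : 1 < be / al).
    { apply Rmult_lt_reg_r with al; [lra|]. unfold Rdiv. rewrite Rmult_assoc, Rinv_l; lra. }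
    destruct (pow_unb (be / al) (f x0 / (ka * g x0)) Ht) as (n & Hn').
    pose proof (It n x0 Hx0).
    assert (Hp : 0 < al ^ n) by (apply pow_lt; lra).
    assert (E : be ^ n = (be / al) ^ n * al ^ n).
    { rewrite <- Rpow_mult_distr. f_equal. field. lra. }
    rewrite E in H0.
    assert (f x0 < ka * (be / al) ^ n * g x0).
    { apply Rmult_lt_reg_r with (/ (ka * g x0)). apply Rinv_0_lt_compat, Rmult_lt_0_compat; lra.
      replace (ka * (be / al) ^ n * g x0 * / (ka * g x0)) with ((be / al) ^ n) by (field; lra). exact Hn'. }
    assert (al ^ n * (ka * (be / al) ^ n * g x0) <= al ^ n * f x0) by (lra).
    assert (al ^ n * f x0 < al ^ n * (ka * (be / al) ^ n * g x0)) by (apply Rmult_lt_compat_l; auto).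
    lra.
Qed.

Definition EIG G L r w := 0 < r /\ contR w /\
  (exists a b, 0 < a /\ forall x, 0 <= x <= L -> a * x <= w x <= b * x) /\
  forall x, 0 <= x <= L -> Hk G L w x = r * w x.

Lemma unique_eig G L r w e : kernel_hyp G -> 0 < L -> EIG G L r w -> pos_eigenvalue G L e -> e = r.
Proof.
  intros H HL (Hr & Hw & (a & b & Ha & Hab) & Hweq) (u & (HC1 & Hu0) & Hnn & (x0 & Hx0 & Hux0) & Heq).
  assert (Hl : 0 <= L) by lra.
  set (ut := fun x => u (clamp L x)).
  assert (Cu : contR ut) by (apply C1_clamp; auto).
  assert (Eu : forall x, 0 <= x <= L -> ut x = u x) by (intros; unfold ut; rewrite clamp_id; auto).
  assert (Hut : forall x, 0 <= x <= L -> Hk G L ut x = e * ut x).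
  { intros x Hx. rewrite Eu by auto. rewrite (Heq x Hx). apply (Hk_ext G L ut u x); auto. }
  assert (Hpos : forall x, 0 <= x <= L -> 0 <= ut x) by (intros; rewrite Eu; auto).
  assert (Hx0p : 0 < x0).
  { destruct (Req_dec x0 0) as [E|]; [subst; contradiction|lra]. }
  assert (Hu0p : 0 < ut x0) by (rewrite Eu by auto; pose proof (Hnn x0 Hx0); lra).
  destruct (kernel_bounds G H L HL) as (c & C & Hc & HC & Hb).
  assert (HK : KB G L c C) by (split; auto).
  set (P := Pw L ut).
  assert (HP : 0 < P).
  { unfold P, Pw. apply (pos_int (fun y => y * ut y) 0 L x0).
    - intros z; apply cR_mult; [apply cR_id|apply Cu].
    - intros y Hy. apply Rmult_le_pos; [lra|apply Hpos; auto].
    - lra.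
    - apply Rmult_lt_0_compat; lra. }
  pose proof (fun x Hx => Hk_lowup G L c C ut x H HL HK Cu Hpos Hx) as Hcmp. fold P in Hcmp.
  assert (He : 0 < e).
  { destruct (Hcmp x0 Hx0) as [K _]. rewrite Hut in K by auto.
    assert (0 < c * x0 * P) by (repeat apply Rmult_lt_0_compat; lra).
    destruct (Rle_dec e 0); [|lra]. assert (e * ut x0 <= 0) by nra. lra. }
  assert (HbL : 0 < b).
  { destruct (Hab L ltac:(lra)). assert (0 < a * L) by nra. nra. }
  assert (HwL : 0 < w L) by (destruct (Hab L ltac:(lra)); nra).
  apply Rle_antisym.
  - apply (compare_conclude G L w ut r e (e * a / (C * P)) x0); auto; try lra.
    + apply Rdiv_lt_0_compat; [nra| apply Rmult_lt_0_compat; lra].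
    + intros x Hx; rewrite Hweq; auto; lra.
    + intros x Hx; rewrite Hut; auto; lra.
    + intros x Hx. destruct (Hcmp x Hx) as [_ K]. rewrite Hut in K by auto.
      destruct (Hab x Hx).
      apply Rle_trans with (a * x); auto.
      apply Rle_trans with (e * a / (C * P) * (C * x * P / e)).
      * apply Rmult_le_compat_l. apply Rlt_le, Rdiv_lt_0_compat; [nra| apply Rmult_lt_0_compat; lra].
        apply Rmult_le_reg_r with e; auto. unfold Rdiv at 1. rewrite Rmult_assoc, Rinv_l, Rmult_1_r by lra. lra.
      * right. field. repeat split; lra.
  - apply (compare_conclude G L ut w e r (c * P / (e * b)) L); auto; try lra.
    + apply Rdiv_lt_0_compat; [nra| apply Rmult_lt_0_compat; lra].
    + intros x Hx; rewrite Hut; auto; lra.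
    + intros x Hx; rewrite Hweq; auto; lra.
    + intros x Hx. destruct (Hcmp x Hx) as [K _]. rewrite Hut in K by auto.
      destruct (Hab x Hx).
      apply Rle_trans with (c * P / (e * b) * (b * x)).
      * apply Rmult_le_compat_l; auto. apply Rlt_le, Rdiv_lt_0_compat; [nra| apply Rmult_lt_0_compat; lra].
      * apply Rmult_le_reg_r with e; auto.
        replace (c * P / (e * b) * (b * x) * e) with (c * x * P) by (field; lra). lra.
Qed.

Lemma mono_eig G L1 L2 r1 w1 r2 w2 : kernel_hyp G -> 0 < L1 -> L1 < L2 ->
  EIG G L1 r1 w1 -> EIG G L2 r2 w2 -> r1 < r2.
Proof.
  intros H HL1 HL12 (Hr1 & Hw1 & (a1 & b1 & Ha1 & Hab1) & Heq1) (Hr2 & Hw2 & (a2 & b2 & Ha2 & Hab2) & Heq2).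
  assert (HL2 : 0 < L2) by lra.
  destruct (kernel_bounds G H L2 HL2) as (c & C & Hc & HC & Hb).
  set (J := RInt (fun y => y * w2 y) L1 L2).
  assert (HJ : 0 < J).
  { unfold J. apply RInt_gt_0; auto.
    - intros y Hy. destruct (Hab2 y ltac:(lra)). apply Rmult_lt_0_compat; nra.
    - intros; apply cR_mult; [apply cR_id|apply Hw2]. }
  assert (Hb2 : 0 < b2) by (destruct (Hab2 L2 ltac:(lra)); nra).
  set (de := c * J / b2).
  assert (Hde : 0 < de) by (unfold de; apply Rdiv_lt_0_compat; nra).
  assert (Split : forall x, 0 <= x <= L1 -> Hk G L1 w2 x <= (r2 - de) * w2 x).
  { intros x Hx.
    assert (E : Hk G L2 w2 x = Hk G L1 w2 x + RInt (fun y => kern G x y * w2 y) L1 L2).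
    { unfold Hk, Kop. symmetry. apply rint_chasles.
      apply Kop_ex; [lra| apply kern_cont, hG_cont, H| auto].
      apply Kop_ex; [lra| apply kern_cont, hG_cont, H| auto]. }
    rewrite Heq2 in E by lra.
    assert (Ex : c * x * J <= RInt (fun y => kern G x y * w2 y) L1 L2).
    { unfold J. rewrite <- rint_scal by (apply exr_cont; [lra| intros; apply cR_mult; [apply cR_id|apply Hw2]]).
      apply rint_le; [lra| |apply Kop_ex; [lra| apply kern_cont, hG_cont, H| auto]|].
      apply exr_scal, exr_cont; [lra| intros; apply cR_mult; [apply cR_id|apply Hw2]].
      intros y Hy. destruct (Hb x y ltac:(lra) ltac:(lra)). destruct (Hab2 y ltac:(lra)).
      unfold kern. replace (c * x * (y * w2 y)) with (c * x * y * w2 y) by ring.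
      apply Rmult_le_compat_r; nra. }
    destruct (Hab2 x ltac:(lra)).
    assert (de * w2 x <= c * x * J).
    { unfold de. apply Rle_trans with (c * J / b2 * (b2 * x)).
      apply Rmult_le_compat_l; [apply Rlt_le, Rdiv_lt_0_compat; nra|lra]. right; field; lra. }
    lra. }
  assert (Hal : 0 <= r2 - de).
  { pose proof (Split L1 ltac:(lra)).
    assert (0 <= Hk G L1 w2 L1) by (apply Hk_nonneg; auto; [intros y Hy; destruct (Hab2 y ltac:(lra)); nra| lra]).
    destruct (Hab2 L1 ltac:(lra)). assert (0 < w2 L1) by nra.
    destruct (Rle_dec 0 (r2 - de)); auto. assert ((r2 - de) * w2 L1 < 0) by (apply Rmult_neg_pos; lra). lra. }
  assert (Hb1 : 0 < b1) by (destruct (Hab1 L1 ltac:(lra)); nra).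
  assert (r1 <= r2 - de); [|lra].
  apply (compare_conclude G L1 w2 w1 (r2 - de) r1 (a2 / b1) L1); auto; try lra.
  - apply Rdiv_lt_0_compat; lra.
  - intros x Hx; rewrite Heq1; auto; lra.
  - intros x Hx. destruct (Hab1 x Hx). destruct (Hab2 x ltac:(lra)).
    apply Rle_trans with (a2 / b1 * (b1 * x)). apply Rmult_le_compat_l; auto. apply Rlt_le, Rdiv_lt_0_compat; lra.
    replace (a2 / b1 * (b1 * x)) with (a2 * x) by (field; lra). lra.
  - destruct (Hab1 L1 ltac:(lra)). nra.
Qed.

Lemma rint_swap (f : R -> R) a b : ex_RInt f a b -> RInt f b a = - RInt f a b.
Proof. intros H. rewrite <- (@opp_RInt_swap R_CompleteNormedModule f a b H). reflexivity. Qed.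

Lemma exr_cont_any (f : R -> R) a b : contR f -> ex_RInt f a b.
Proof.
  intros Hf. apply (@ex_RInt_continuous R_CompleteNormedModule). intros; apply Hf.
Qed.

Lemma Kop_G_cont_any G a b f : kernel_hyp G -> contR f -> contR (Kop (kern G) a b f).
Proof.
  intros H Hf. destruct (Rle_dec a b).
  - apply Kop_G_cont; auto.
  - intros x. assert (E : forall y, Kop (kern G) a b f y = - Kop (kern G) b a f y).
    { intros y. unfold Kop. apply rint_swap. apply exr_cont_any. intros z. apply cR_mult; auto.
      apply kern_cont, hG_cont, H. }
    apply cont_of_eps. intros eps He.
    destruct (cont_eps _ x (Kop_G_cont G b a f H ltac:(lra) Hf x) eps He) as (d & Hd & Hd').
    exists d; split; auto. intros y Hy. rewrite !E. replace (- Kop (kern G) b a f y - - Kop (kern G) b a f x)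
      with (- (Kop (kern G) b a f y - Kop (kern G) b a f x)) by ring. rewrite Rabs_Ropp. auto.
Qed.

Lemma kern_sym G x y : kernel_hyp G -> kern G x y = kern G y x.
Proof.
  intros H. unfold kern. rewrite <- (hG_even G H (x - y)). replace (- (x - y)) with (y - x) by ring.
  rewrite Rplus_comm. reflexivity.
Qed.

Lemma cont2_lin (F : R -> R) al be x t : (forall z, continuous F z) ->
  continuity_2d_pt (fun u w => F (al * u + be * w)) x t.
Proof.
  intros Hc. apply (continuity_1d_2d_pt_comp F (fun u w => al * u + be * w)).
  - apply cont_iff, Hc.
  - apply continuity_2d_pt_plus; apply continuity_2d_pt_mult; try apply continuity_2d_pt_const.
    apply continuity_2d_pt_id1. apply continuity_2d_pt_id2.
Qed.

Lemma deriv_upper (f : R -> R) a t : contR f -> is_derive (fun s => RInt f a s) t (f t).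
Proof.
  intros Hf. apply (@is_derive_RInt R_NormedModule f (fun s => RInt f a s) a t).
  - exists (mkposreal 1 Rlt_0_1). intros y _. apply (@RInt_correct R_CompleteNormedModule). apply exr_cont_any; auto.
  - apply Hf.
Qed.

Lemma sym_Hk G L a b : kernel_hyp G -> 0 < L -> contR a -> contR b ->
  RInt (fun x => b x * Hk G L a x) 0 L = RInt (fun x => a x * Hk G L b x) 0 L.
Proof.
  intros H HL Ha Hb.
  set (Phi := fun t => RInt (fun x => b x * Hk G L a x) 0 t).
  set (Psi := fun t => RInt (fun y => a y * Kop (kern G) 0 t b y) 0 L).
  assert (CbH : contR (fun x => b x * Hk G L a x)).
  { intros z. apply cR_mult; auto. apply Hk_cont; auto; lra. }
  assert (D1 : forall t, is_derive Phi t (b t * Hk G L a t)).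
  { intros t. apply (deriv_upper (fun x => b x * Hk G L a x)). auto. }
  assert (Dk : forall y t, Derive (fun z => a y * Kop (kern G) 0 z b y) t = a y * (kern G y t * b t)).
  { intros y t. apply is_derive_unique. apply is_derive_scal. unfold Kop.
    apply (deriv_upper (fun x => kern G y x * b x)). intros z; apply cR_mult; auto. apply kern_cont, hG_cont, H. }
  assert (D2 : forall t, is_derive Psi t (b t * Hk G L a t)).
  { intros t.
    assert (E : b t * Hk G L a t = RInt (fun y => Derive (fun z => a y * Kop (kern G) 0 z b y) t) 0 L).
    { unfold Hk, Kop. rewrite <- rint_scal by (apply exr_cont_any; intros z; apply cR_mult; auto; apply kern_cont, hG_cont, H).
      apply rint_ext_all. intros y. rewrite Dk. rewrite (kern_sym G y t H). ring. }
    rewrite E.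
    apply (is_derive_RInt_param (fun z y => a y * Kop (kern G) 0 z b y) 0 L t).
    - exists (mkposreal 1 Rlt_0_1). intros z _ y _. eexists. apply is_derive_scal. unfold Kop.
      apply (deriv_upper (fun x => kern G y x * b x)). intros w; apply cR_mult; auto. apply kern_cont, hG_cont, H.
    - intros y _.
      apply (continuity_2d_pt_ext (fun u v => a (0 * u + 1 * v) * ((G ((-1) * u + 1 * v) - G (1 * u + 1 * v)) * b (1 * u + 0 * v)))).
      { intros u v. rewrite Dk. unfold kern. repeat (f_equal; try ring). }
      repeat apply continuity_2d_pt_mult; try apply continuity_2d_pt_minus; apply cont2_lin; auto; apply hG_cont, H.
    - exists (mkposreal 1 Rlt_0_1). intros z _. apply exr_cont_any. intros w. apply cR_mult; auto.
      apply Kop_G_cont_any; auto. }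
  assert (D : forall t, is_derive (fun s => Phi s - Psi s) t 0).
  { intros t. replace 0 with (b t * Hk G L a t - b t * Hk G L a t) by ring.
    apply (@is_derive_minus R_AbsRing R_NormedModule); auto. }
  destruct (MVT_R (fun s => Phi s - Psi s) (fun _ => 0) 0 L ltac:(lra)) as (c & _ & Ec).
  { intros; apply D. }
  assert (P0 : Phi 0 = 0) by (unfold Phi; apply (@RInt_point R_CompleteNormedModule)).
  assert (S0 : Psi 0 = 0).
  { unfold Psi. rewrite (rint_ext_all _ (fun _ => 0)). rewrite rint_const. apply Rmult_0_r.
    intros y. unfold Kop. rewrite (@RInt_point R_CompleteNormedModule). apply Rmult_0_r. }
  unfold Phi, Psi in *. simpl in Ec. rewrite P0, S0 in Ec.
  assert (Ex : RInt (fun x => b x * Hk G L a x) 0 L = RInt (fun y => a y * Kop (kern G) 0 L b y) 0 L) by lra.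
  rewrite Ex. reflexivity.
Qed.

Lemma hG_int G : kernel_hyp G -> is_RInt_gen G (Rbar_locally m_infty) (Rbar_locally p_infty) 1.
Proof. intros (_&_&_&_&_&_&_&H). exact H. Qed.

Lemma G_contR G : kernel_hyp G -> contR G.
Proof. intros H x; apply hG_cont, H. Qed.

Lemma tot G : kernel_hyp G -> forall eps, 0 < eps -> exists A, 0 < A /\
  forall a b, a <= - A -> A <= b -> Rabs (RInt G a b - 1) < eps.
Proof.
  intros H eps He. pose proof (hG_int G H) as Hi.
  unfold is_RInt_gen, filterlimi, filtermapi in Hi. simpl in Hi.
  assert (Hbl : locally 1 (ball 1 (mkposreal eps He))) by (exists (mkposreal eps He); intros y Hy; exact Hy).
  specialize (Hi _ Hbl).
  destruct Hi as [Q Rr HQ HR HP].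
  destruct HQ as (M1 & HM1). destruct HR as (M2 & HM2).
  exists (Rabs M1 + Rabs M2 + 1). split. pose proof (Rabs_pos M1); pose proof (Rabs_pos M2); lra.
  intros a b Ha Hb.
  destruct (HP a b) as (y & Hy & Hyb).
  { apply HM1. pose proof (Rle_abs (- M1)). rewrite Rabs_Ropp in H0. pose proof (Rabs_pos M2). lra. }
  { apply HM2. pose proof (Rle_abs M2). pose proof (Rabs_pos M1). lra. }
  simpl in Hy. rewrite (@is_RInt_unique R_CompleteNormedModule G a b y Hy).
  apply ball_R in Hyb. exact Hyb.
Qed.

Lemma G_int_nonneg G a b : kernel_hyp G -> a <= b -> 0 <= RInt G a b.
Proof.
  intros H Hab. apply rint_nonneg; auto. apply exr_cont_any, G_contR, H.
  intros; apply hG_nonneg, H.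
Qed.

Lemma G_int_mono G a b a' b' : kernel_hyp G -> a' <= a -> a <= b -> b <= b' -> RInt G a b <= RInt G a' b'.
Proof.
  intros H H1 H2 H3. pose proof (exr_cont_any G) as Ex. pose proof (G_contR G H) as Hc.
  rewrite <- (rint_chasles G a' a b'); auto.
  rewrite <- (rint_chasles G a b b'); auto.
  pose proof (G_int_nonneg G a' a H H1). pose proof (G_int_nonneg G b b' H H3). lra.
Qed.

Lemma G_int_le1 G a b : kernel_hyp G -> a <= b -> RInt G a b <= 1.
Proof.
  intros H Hab. apply Rnot_lt_le. intros Hlt.
  destruct (tot G H (RInt G a b - 1) ltac:(lra)) as (A & HA & HT).
  pose proof (HT (Rmin a (- A)) (Rmax b A) (Rmin_r _ _) (Rmax_r _ _)).
  pose proof (G_int_mono G a b (Rmin a (- A)) (Rmax b A) H (Rmin_l _ _) Hab (Rmax_l _ _)).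
  apply Rabs_def2 in H0. lra.
Qed.

Lemma G_tail G : kernel_hyp G -> forall eps, 0 < eps -> exists A, 0 < A /\
  (forall a b, a <= - A -> A <= b -> 1 - eps <= RInt G a b) /\
  (forall a b, A <= a -> a <= b -> RInt G a b <= eps).
Proof.
  intros H eps He. destruct (tot G H (eps / 2) ltac:(lra)) as (A & HA & HT).
  exists A. split; auto. split.
  - intros a b Ha Hb. pose proof (HT a b Ha Hb). apply Rabs_def2 in H0. lra.
  - intros a b Ha Hab. pose proof (exr_cont_any G) as Ex. pose proof (G_contR G H) as Hc.
    pose proof (HT (- A) a ltac:(lra) Ha). pose proof (HT (- A) b ltac:(lra) ltac:(lra)).
    rewrite <- (rint_chasles G (- A) a b) in H1; auto.
    apply Rabs_def2 in H0. apply Rabs_def2 in H1. lra.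
Qed.

Lemma rint_opp' (h : R -> R) a b : ex_RInt h a b -> - RInt h a b = RInt (fun y => - h y) a b.
Proof.
  intros Hh. rewrite <- (Rmult_1_l (RInt h a b)). rewrite Ropp_mult_distr_l, <- rint_scal by auto.
  apply rint_ext_all. intros; ring.
Qed.

Lemma shift_minus G x a b : kernel_hyp G -> RInt (fun y => G (x - y)) a b = RInt G (x - b) (x - a).
Proof.
  intros H. pose proof (G_contR G H) as Hc.
  pose proof (@RInt_comp_lin R_CompleteNormedModule G (-1) x a b (exr_cont_any _ _ _ Hc)) as E.
  rewrite (rint_swap G (x - a) (x - b)) by (apply exr_cont_any; auto).
  replace (x - a) with (-1 * a + x) by ring. replace (x - b) with (-1 * b + x) by ring.
  rewrite <- E. rewrite rint_opp'.
  - apply rint_ext_all. intros y. unfold scal; simpl; unfold mult; simpl. replace (-1 * y + x) with (x - y) by ring. ring.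
  - apply (@ex_RInt_comp_lin R_NormedModule). apply exr_cont_any; auto.
Qed.

Lemma shift_plus G x a b : kernel_hyp G -> RInt (fun y => G (x + y)) a b = RInt G (x + a) (x + b).
Proof.
  intros H. pose proof (G_contR G H) as Hc.
  pose proof (@RInt_comp_lin R_CompleteNormedModule G 1 x a b (exr_cont_any _ _ _ Hc)) as E.
  replace (1 * a + x) with (x + a) in E by ring. replace (1 * b + x) with (x + b) in E by ring.
  rewrite <- E. apply rint_ext_all. intros y. unfold scal; simpl; unfold mult; simpl.
  rewrite Rmult_1_l. f_equal. ring.
Qed.

Lemma upper_eig G L r w : kernel_hyp G -> 0 < L -> EIG G L r w -> r <= 1.
Proof.
  intros H HL (Hr & Hw & (a & b & Ha & Hab) & Heq).
  assert (Hl : 0 <= L) by lra.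
  destruct (continuity_ab_maj w 0 L Hl) as (xm & Hm & Hxm).
  { intros; apply cont_iff, Hw. }
  assert (Hwm : 0 < w xm) by (destruct (Hab L ltac:(lra)); pose proof (Hm L ltac:(lra)); nra).
  assert (Hw0 : forall y, 0 <= y <= L -> 0 <= w y) by (intros y Hy; destruct (Hab y Hy); nra).
  assert (K : Hk G L w xm <= w xm * RInt (fun y => G (xm - y)) 0 L).
  { unfold Hk, Kop. rewrite <- rint_scal.
    2:{ apply exr_cont_any. intros z. apply (cR_comp (fun y => xm - y) G). apply cR_minus; [apply cR_const|apply cR_id]. apply G_contR, H. }
    apply rint_le; auto.
    - apply Kop_ex; auto. apply kern_cont, hG_cont, H.
    - apply exr_scal, exr_cont_any. intros z. apply (cR_comp (fun y => xm - y) G). apply cR_minus; [apply cR_const|apply cR_id]. apply G_contR, H.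
    - intros y Hy. unfold kern. pose proof (hG_nonneg G H (xm + y)). pose proof (hG_nonneg G H (xm - y)).
      pose proof (Hw0 y Hy). pose proof (Hm y Hy). nra. }
  rewrite Heq in K by auto. rewrite shift_minus in K by auto. replace (xm - 0) with xm in K by ring.
  pose proof (G_int_le1 G (xm - L) xm H ltac:(lra)).
  assert (r * w xm <= 1 * w xm) by nra.
  apply Rmult_le_reg_r with (w xm); auto.
Qed.

Lemma cmul (f g : R -> R) : contR f -> contR g -> contR (fun x => f x * g x).
Proof. intros Hf Hg x; apply cR_mult; auto. Qed.

Lemma rayleigh G L r w q : kernel_hyp G -> 0 < L -> EIG G L r w -> contR q ->
  RInt (fun x => (w x * q x) * Hk G L (fun y => w y * q y) x) 0 L <=
  r * RInt (fun x => (w x * q x) * (w x * q x)) 0 L.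
Proof.
  intros H HL (Hr & Hw & (a & b & Ha & Hab) & Heq) Hq.
  assert (Hl : 0 <= L) by lra.
  set (v := fun y => w y * q y). set (v2 := fun y => w y * (q y * q y)).
  assert (Cv : contR v) by (apply cmul; auto).
  assert (Cv2 : contR v2) by (apply cmul; auto; apply cmul; auto).
  assert (Hw0 : forall y, 0 <= y <= L -> 0 <= w y) by (intros y Hy; destruct (Hab y Hy); nra).
  assert (CHw : contR (Hk G L w)) by (apply Hk_cont; auto).
  assert (CHv : contR (Hk G L v)) by (apply Hk_cont; auto).
  assert (CHv2 : contR (Hk G L v2)) by (apply Hk_cont; auto).
  set (J := fun x => w x * (q x * q x * Hk G L w x) - 2 * (v x * Hk G L v x) + w x * Hk G L v2 x).
  assert (CJ : contR J).
  { intros x. unfold J. apply cR_plus; [apply cR_minus|].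
    - apply cR_mult; auto. apply cR_mult; auto. apply cR_mult; auto.
    - apply cR_mult; [apply cR_const|]. apply cR_mult; auto.
    - apply cR_mult; auto. }
  assert (Jpos : forall x, 0 <= x <= L -> 0 <= J x).
  { intros x Hx.
    assert (E : J x = w x * RInt (fun y => kern G x y * w y * ((q x - q y) * (q x - q y))) 0 L).
    { assert (EI : RInt (fun y => kern G x y * w y * ((q x - q y) * (q x - q y))) 0 L =
         q x * q x * Hk G L w x - 2 * q x * Hk G L v x + Hk G L v2 x).
      2:{ rewrite EI. unfold J. change (v x) with (w x * q x). ring. }
      assert (Ex : forall y, kern G x y * w y * ((q x - q y) * (q x - q y)) =
          (q x * q x) * (kern G x y * w y) - (2 * q x) * (kern G x y * v y) + kern G x y * v2 y).
      { intros y. unfold v, v2. ring. }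
      rewrite (rint_ext_all _ _ 0 L Ex).
      assert (E1 := Hk_ex G L w x H Hl Hw). assert (E2 := Hk_ex G L v x H Hl Cv). assert (E3 := Hk_ex G L v2 x H Hl Cv2).
      rewrite rint_plus; [| apply exr_minus; apply exr_scal; auto | auto].
      rewrite rint_minus; [| apply exr_scal; auto | apply exr_scal; auto].
      rewrite !rint_scal; auto. }
    rewrite E. apply Rmult_le_pos; auto. apply rint_nonneg; auto.
    - apply exr_cont_any. intros z. apply cR_mult; [apply cR_mult; [apply kern_cont, hG_cont, H| apply Hw]|].
      apply cR_mult; apply cR_minus; auto; apply cR_const.
    - intros y Hy. apply Rmult_le_pos; [apply Rmult_le_pos|].
      apply (kern_nonneg G L); auto. auto. apply Rle_0_sqr. }
  assert (I0 : 0 <= RInt J 0 L) by (apply rint_nonneg; auto; apply exr_cont_any; auto).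
  assert (Ex1 : forall f g, contR f -> contR g -> ex_RInt (fun x => f x * g x) 0 L).
  { intros f g Hf Hg. apply exr_cont_any. apply cmul; auto. }
  unfold J in I0.
  rewrite rint_plus in I0; [| apply exr_minus; [apply (Ex1 w (fun x => q x * q x * Hk G L w x)); auto; apply cmul; auto; apply cmul; auto| apply exr_scal, Ex1; auto] | apply Ex1; auto].
  rewrite rint_minus in I0; [| apply (Ex1 w (fun x => q x * q x * Hk G L w x)); auto; apply cmul; auto; apply cmul; auto| apply exr_scal, Ex1; auto].
  rewrite rint_scal in I0 by (apply Ex1; auto).
  assert (T1 : RInt (fun x => w x * (q x * q x * Hk G L w x)) 0 L = r * RInt (fun x => v x * v x) 0 L).
  { rewrite <- rint_scal by (apply Ex1; auto). apply rint_ext; auto. intros x Hx. rewrite Heq by auto. unfold v. ring. }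
  assert (T3 : RInt (fun x => w x * Hk G L v2 x) 0 L = r * RInt (fun x => v x * v x) 0 L).
  { rewrite (sym_Hk G L v2 w H HL Cv2 Hw).
    rewrite <- rint_scal by (apply Ex1; auto). apply rint_ext; auto. intros x Hx. rewrite Heq by auto. unfold v, v2. ring. }
  rewrite T1, T3 in I0. change (RInt (fun x => v x * Hk G L v x) 0 L <= r * RInt (fun x => v x * v x) 0 L). lra.
Qed.

Definition psi x := clamp 1 (x - 1).

Lemma psi_in x : 0 <= psi x <= 1.
Proof. apply clamp_in; lra. Qed.

Lemma psi_zero x : x <= 1 -> psi x = 0.
Proof. intros Hx. unfold psi, clamp, Rmax, Rmin. destruct (Rle_dec (x - 1) 1); destruct (Rle_dec 0 _); lra. Qed.

Lemma psi_one x : 2 <= x -> psi x = 1.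
Proof. intros Hx. unfold psi, clamp, Rmax, Rmin. destruct (Rle_dec (x - 1) 1); destruct (Rle_dec 0 _); lra. Qed.

Lemma psi_cont : contR psi.
Proof.
  intros x. apply cont_of_eps. intros eps He. exists eps. split; auto. intros y Hy.
  unfold psi. eapply Rle_lt_trans. apply clamp_lip; lra.
  replace (y - 1 - (x - 1)) with (y - x) by ring. auto.
Qed.

Lemma Rmax_lip u v a : Rabs (Rmax u a - Rmax v a) <= Rabs (u - v).
Proof.
  unfold Rmax. destruct (Rle_dec u a); destruct (Rle_dec v a);
  apply Rabs_le; pose proof (Rle_abs (u - v)); pose proof (Rle_abs (- (u - v))); rewrite Rabs_Ropp in *; lra.
Qed.

Lemma cont_max (f : R -> R) a : contR f -> contR (fun x => Rmax (f x) a).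
Proof.
  intros Hf x. apply cont_of_eps. intros eps He.
  destruct (cont_eps f x (Hf x) eps He) as (d & Hd & Hd'). exists d. split; auto.
  intros y Hy. eapply Rle_lt_trans. apply Rmax_lip. auto.
Qed.

Lemma cont_inv (f : R -> R) : contR f -> (forall x, f x <> 0) -> contR (fun x => / f x).
Proof.
  intros Hf Hn x. apply cont_iff. apply continuity_pt_inv. apply cont_iff, Hf. apply Hn.
Qed.

Lemma rayleigh_psi G L r w : kernel_hyp G -> 0 < L -> EIG G L r w ->
  RInt (fun x => psi x * Hk G L psi x) 0 L <= r * RInt (fun x => psi x * psi x) 0 L.
Proof.
  intros H HL HE. assert (HE' := HE). destruct HE' as (Hr & Hw & (a & b & Ha & Hab) & Heq).
  assert (Hl : 0 <= L) by lra.
  set (q := fun x => psi x * / Rmax (w x) a).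
  assert (Cq : contR q).
  { apply cmul. apply psi_cont. apply cont_inv. apply cont_max; auto.
    intros x. pose proof (Rmax_r (w x) a). lra. }
  assert (Ev : forall x, 0 <= x <= L -> w x * q x = psi x).
  { intros x Hx. unfold q. destruct (Rle_dec x 1).
    - rewrite psi_zero by auto. ring.
    - destruct (Hab x Hx). assert (a <= w x) by nra.
      rewrite Rmax_left by auto. field. lra. }
  pose proof (rayleigh G L r w q H HL HE Cq) as R.
  rewrite (rint_ext (fun x => w x * q x * (w x * q x)) (fun x => psi x * psi x)) in R; auto.
  2:{ intros x Hx; rewrite Ev; auto. }
  rewrite (rint_ext (fun x => w x * q x * Hk G L (fun y => w y * q y) x) (fun x => psi x * Hk G L psi x)) in R; auto.
  intros x Hx. rewrite Ev by auto. f_equal. apply Hk_ext; auto.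
Qed.

Lemma one_cont : contR (fun _ => 1).
Proof. intros x; apply cR_const. Qed.

Lemma kernG_contR G x : kernel_hyp G -> contR (kern G x).
Proof. intros H y. apply kern_cont. intros z; apply hG_cont, H. Qed.

Lemma Kk_formula G L x : kernel_hyp G ->
  Kop (kern G) 2 L (fun _ => 1) x = RInt G (x - L) (x - 2) - RInt G (x + 2) (x + L).
Proof.
  intros H. unfold Kop. pose proof (G_contR G H) as Hc.
  rewrite (rint_ext_all _ (fun y => G (x - y) - G (x + y))) by (intros; unfold kern; ring).
  rewrite rint_minus.
  - rewrite shift_minus, shift_plus by auto. reflexivity.
  - apply exr_cont_any. intros z. apply (cR_comp (fun y => x - y) G). apply cR_minus; [apply cR_const|apply cR_id]. apply Hc.
  - apply exr_cont_any. intros z. apply (cR_comp (fun y => x + y) G). apply cR_plus; [apply cR_const|apply cR_id]. apply Hc.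
Qed.

Lemma const_lb (f : R -> R) a b m : a <= b -> contR f -> (forall x, a <= x <= b -> m <= f x) -> (b - a) * m <= RInt f a b.
Proof.
  intros Hab Hf Hm. rewrite <- rint_const. apply rint_le; auto. apply ex_RInt_const. apply exr_cont_any; auto.
Qed.

Lemma lower_bound G : kernel_hyp G -> forall eps, 0 < eps -> exists L0, 0 < L0 /\
  forall L r w, L0 <= L -> EIG G L r w -> 1 - eps <= r.
Proof.
  intros H eps He.
  destruct (Rlt_dec eps 1) as [Hlt|Hge].
  2:{ exists 1. split; [lra|]. intros L r w _ (Hr & _). lra. }
  set (e := eps / 3).
  destruct (G_tail G H e ltac:(unfold e; lra)) as (A & HA & T1 & T2).
  exists (2 * A + 2 + (4 * A + 2) / e). split.
  { assert (0 < (4 * A + 2) / e) by (apply Rdiv_lt_0_compat; unfold e; lra). lra. }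
  intros L r w HL0 HE.
  assert (HLe : (4 * A + 2) / e <= L - 2 * A - 2) by lra.
  assert (He' : 0 < e) by (unfold e; lra).
  assert (HeL : 4 * A + 2 <= e * (L - 2 * A - 2)).
  { apply Rmult_le_reg_r with (/ e). apply Rinv_0_lt_compat; lra.
    replace (e * (L - 2 * A - 2) * / e) with (L - 2 * A - 2) by (field; lra). exact HLe. }
  assert (HL2 : 2 * A + 2 <= L).
  { assert (0 <= e * (L - 2 * A - 2)) by lra.
    destruct (Rle_dec (2 * A + 2) L); auto. assert (e * (L - 2 * A - 2) < 0) by (apply Rmult_pos_neg; lra). lra. }
  assert (HL : 0 < L) by lra. assert (Hl : 0 <= L) by lra.
  assert (HE' := HE). destruct HE' as (Hr & _).
  pose proof (rayleigh_psi G L r w H HL HE) as Ray.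
  assert (S1 : RInt (fun x => psi x * psi x) 0 L <= L).
  { apply Rle_trans with (RInt (fun _ => 1) 0 L).
    - apply rint_le; auto. apply exr_cont_any, cmul; apply psi_cont. apply ex_RInt_const.
      intros t _. pose proof (psi_in t). nra.
    - rewrite rint_const. lra. }
  set (Kk := Kop (kern G) 2 L (fun _ => 1)).
  assert (CKk : contR Kk) by (apply Kop_G_cont; auto; [lra|apply one_cont]).
  assert (CHp : contR (Hk G L psi)) by (apply Hk_cont; auto; apply psi_cont).
  assert (HpK : forall x, 0 <= x <= L -> Kk x <= Hk G L psi x).
  { intros x Hx. unfold Kk, Hk, Kop.
    rewrite <- (rint_chasles (fun y => kern G x y * psi y) 0 2 L).
    2,3: apply exr_cont_any, cmul; [apply kernG_contR, H|apply psi_cont].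
    rewrite (rint_ext (fun y => kern G x y * psi y) (fun y => kern G x y * 1) 2 L) by
      (try lra; intros y Hy; rewrite psi_one by lra; reflexivity).
    assert (0 <= RInt (fun y => kern G x y * psi y) 0 2).
    { apply rint_nonneg; [lra| apply exr_cont_any, cmul; [apply kernG_contR, H|apply psi_cont]|].
      intros y Hy. apply Rmult_le_pos. apply (kern_nonneg G L); auto; lra. apply psi_in. }
    lra. }
  assert (S2 : RInt Kk 2 L <= RInt (fun x => psi x * Hk G L psi x) 0 L).
  { rewrite <- (rint_chasles (fun x => psi x * Hk G L psi x) 0 2 L).
    2,3: apply exr_cont_any, cmul; [apply psi_cont|auto].
    assert (0 <= RInt (fun x => psi x * Hk G L psi x) 0 2).
    { apply rint_nonneg; [lra| apply exr_cont_any, cmul; [apply psi_cont|auto]|].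
      intros y Hy. apply Rmult_le_pos. apply psi_in. apply Hk_nonneg; auto. apply psi_cont.
      intros; apply psi_in. lra. }
    assert (RInt Kk 2 L <= RInt (fun x => psi x * Hk G L psi x) 2 L).
    { apply rint_le; [lra|apply exr_cont_any; auto|apply exr_cont_any, cmul; [apply psi_cont|auto]|].
      intros x Hx. rewrite psi_one by lra. rewrite Rmult_1_l. apply HpK; lra. }
    lra. }
  assert (S3 : A * (-1) + (L - 2 * A - 2) * (1 - 2 * e) + A * (- e) <= RInt Kk 2 L).
  { rewrite <- (rint_chasles Kk 2 (A + 2) L) by (apply exr_cont_any; auto).
    rewrite <- (rint_chasles Kk (A + 2) (L - A) L) by (apply exr_cont_any; auto).
    assert (P1 : A * (-1) <= RInt Kk 2 (A + 2)).
    { replace A with ((A + 2) - 2) at 1 by ring. apply const_lb; auto; try lra.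
      intros x Hx. unfold Kk. rewrite Kk_formula by auto.
      pose proof (G_int_nonneg G (x - L) (x - 2) H ltac:(lra)).
      pose proof (G_int_le1 G (x + 2) (x + L) H ltac:(lra)). lra. }
    assert (P2 : (L - 2 * A - 2) * (1 - 2 * e) <= RInt Kk (A + 2) (L - A)).
    { replace (L - 2 * A - 2) with ((L - A) - (A + 2)) by ring. apply const_lb; auto; try lra.
      intros x Hx. unfold Kk. rewrite Kk_formula by auto.
      pose proof (T1 (x - L) (x - 2) ltac:(lra) ltac:(lra)).
      pose proof (T2 (x + 2) (x + L) ltac:(lra) ltac:(lra)). lra. }
    assert (P3 : A * (- e) <= RInt Kk (L - A) L).
    { replace A with (L - (L - A)) at 1 by ring. apply const_lb; auto; try lra.
      intros x Hx. unfold Kk. rewrite Kk_formula by auto.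
      pose proof (G_int_nonneg G (x - L) (x - 2) H ltac:(lra)).
      pose proof (T2 (x + 2) (x + L) ltac:(lra) ltac:(lra)). lra. }
    lra. }
  assert (Hfin : L * (1 - eps) <= r * L).
  { assert (r * RInt (fun x => psi x * psi x) 0 L <= r * L) by (apply Rmult_le_compat_l; lra).
    assert (A * e <= A) by (apply Rle_trans with (A * 1); [apply Rmult_le_compat_l; unfold e; lra| lra]).
    assert (0 <= (2 * A + 2) * (2 * e)) by (apply Rmult_le_pos; lra).
    unfold e in *. nra. }
  apply Rmult_le_reg_r with L; auto. lra.
Qed.

Lemma EIG_pos G L r w : kernel_hyp G -> 0 < L -> EIG G L r w -> pos_eigenvalue G L r.
Proof.
  intros H HL (Hr & Hw & (a & b & Ha & Hab) & Heq).
  assert (Hl : 0 <= L) by lra.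
  set (u := Hk G L (fun y => / r * w y)).
  assert (Cv : contR (fun y => / r * w y)) by (intros z; apply cR_mult; [apply cR_const|apply Hw]).
  assert (Eu : forall x, 0 <= x <= L -> u x = w x).
  { intros x Hx. unfold u. rewrite Hk_scal; auto. rewrite Heq by auto. field. lra. }
  exists u. split; [split|].
  - apply Hk_C1; auto.
  - apply Hk_at0, H.
  - split; [|split].
    + intros x Hx. rewrite Eu by auto. destruct (Hab x Hx). nra.
    + exists L. split; [lra|]. rewrite Eu by lra. destruct (Hab L ltac:(lra)). nra.
    + intros x Hx. rewrite Hk_H_op. rewrite (Hk_ext G L u w x Hl Eu). rewrite Heq, Eu; auto.
Qed.

Theorem proposition4p12 (G : R -> R) (hG : kernel_hyp G) :
  exists eps : R -> R,
    (forall L, 0 < L ->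
       pos_eigenvalue G L (eps L) /\
       (forall e, pos_eigenvalue G L e -> e = eps L)) /\
    eps 0 = 0 /\
    (forall L1 L2, 0 <= L1 -> L1 < L2 -> eps L1 < eps L2) /\
    is_lim eps p_infty 1.
Proof.
  assert (EX : forall L, 0 < L -> exists r, exists w, EIG G L r w).
  { intros L HL. destruct (eig_exists G L hG HL) as (r & w & HE). exists r, w. exact HE. }
  set (f := fun L => match Rlt_dec 0 L with
                     | left HL => proj1_sig (constructive_indefinite_description _ (EX L HL))
                     | right _ => 0 end).
  assert (Hf : forall L, 0 < L -> exists w, EIG G L (f L) w).
  { intros L HL. unfold f. destruct (Rlt_dec 0 L) as [HL'|]; [|lra].
    destruct (constructive_indefinite_description _ (EX L HL')) as (r & Hr). simpl. exact Hr. }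
  assert (Hf0 : forall L, L <= 0 -> f L = 0).
  { intros L HL. unfold f. destruct (Rlt_dec 0 L); [exfalso; lra|reflexivity]. }
  exists f. split; [|split; [|split]].
  - intros L HL. destruct (Hf L HL) as (w & HE). split.
    + apply (EIG_pos G L (f L) w hG HL HE).
    + intros e He. apply (unique_eig G L (f L) w e hG HL HE He).
  - apply Hf0; lra.
  - intros L1 L2 H1 H12. destruct (Hf L2 ltac:(lra)) as (w2 & HE2).
    destruct (Req_dec L1 0) as [E|Hne].
    + rewrite E, Hf0 by lra. destruct HE2 as (Hr & _). exact Hr.
    + destruct (Hf L1 ltac:(lra)) as (w1 & HE1). apply (mono_eig G L1 L2 (f L1) w1 (f L2) w2); auto; lra.
  - apply is_lim_spec. intros eps.
    destruct (lower_bound G hG (eps / 2) ltac:(pose proof (cond_pos eps); lra)) as (L0 & HL0 & Hlb).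
    exists (L0 + 1). intros y Hy.
    destruct (Hf y ltac:(lra)) as (w & HE).
    pose proof (Hlb y (f y) w ltac:(lra) HE). pose proof (upper_eig G y (f y) w hG ltac:(lra) HE).
    pose proof (cond_pos eps). apply Rabs_def1; lra.
Qed.
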